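(* Consider the following eight-dimensional real Lie algebras on a basis $X_1,\dots,X_8$, with $[X_i,X_j]=\sum_kC_{ij}^kX_k$ and only nonzero $C_{ij}^k$ with $i<j$ listed. Let (A) denote $C_{23}^1=1,C_{12}^3=1,C_{13}^2=-1,C_{14}^7=\tfrac12,C_{15}^6=\tfrac12,C_{16}^5=-\tfrac12,C_{17}^4=-\tfrac12,C_{24}^5=\tfrac12,C_{25}^4=-\tfrac12,C_{26}^7=\tfrac12,C_{27}^6=-\tfrac12,C_{34}^6=\tfrac12,C_{35}^7=-\tfrac12,C_{36}^4=-\tfrac12,C_{37}^5=\tfrac12$; (B) denote $C_{12}^2=2,C_{13}^3=-2,C_{23}^1=1,C_{14}^4=1,C_{15}^5=-1,C_{25}^4=1,C_{34}^5=1,C_{16}^6=1,C_{17}^7=-1,C_{27}^6=1,C_{36}^7=1$. $L_{8,2}$: (A) and $C_{45}^8=1,C_{67}^8=-1$. $L_{8,4}^0$: (A) and $C_{48}^6=-1,C_{58}^7=-1,C_{68}^4=1,C_{78}^5=1$. $L_{8,5}$: $C_{23}^1=1,C_{12}^3=1,C_{13}^2=-1,C_{14}^7=\tfrac12,C_{15}^6=-\tfrac12,C_{16}^5=2,C_{16}^8=-1,C_{17}^4=-2,C_{18}^6=3,C_{24}^6=\tfrac12,C_{25}^7=\tfrac12,C_{26}^4=-2,C_{27}^5=-2,C_{27}^8=-1,C_{28}^7=3,C_{34}^5=2,C_{35}^4=-2,C_{36}^7=1,C_{37}^6=-1$. $L_{8,13}^{\varepsilon}$ ($\varepsilon=\pm1$):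 (B) and $C_{45}^8=1,C_{67}^8=\varepsilon$. $L_{8,14}$: (B) and $C_{68}^4=1,C_{78}^5=1$. $L_{8,15}$: (B) and $C_{67}^8=1,C_{68}^4=1,C_{78}^5=1$. $L_{8,17}^{-1}$: (B) and $C_{48}^4=1,C_{58}^5=1,C_{68}^6=-1,C_{78}^7=-1$. $L_{8,18}^0$: (B) and $C_{48}^6=-1,C_{58}^7=-1,C_{68}^4=1,C_{78}^5=1$. $L_{8,21}$: $C_{12}^2=2,C_{13}^3=-2,C_{23}^1=1,C_{14}^4=4,C_{15}^5=2,C_{17}^7=-2,C_{18}^8=-4,C_{25}^4=4,C_{26}^5=3,C_{27}^6=2,C_{28}^7=1,C_{34}^5=1,C_{35}^6=2,C_{36}^7=3,C_{37}^8=4$. Then the indecomposable Lie algebras $L_{8,2},L_{8,4}^0,L_{8,5},L_{8,13}^{\varepsilon},L_{8,14},L_{8,15},L_{8,17}^{-1},L_{8,18}^0,L_{8,21}$ are all obtained as contractions of simple Lie algebras. More precisely: (i) $\mathfrak{su}(3)$ contracts onto $L_{8,2}$, $L_{8,4}^0$ and $L_{8,5}$; (ii) $\mathfrak{su}(2,1)$ contracts onto $L_{8,2}$, $L_{8,4}^0$, $L_{8,13}^1$, $L_{8,14}$, $L_{8,15}$, $L_{8,18}^0$ and $L_{8,21}$; (iii) $\mathfrak{sl}(3,\mathbb{R})$ contracts onto $L_{8,5}$, $L_{8,13}^{-1}$, $L_{8,14}$, $L_{8,15}$, $L_{8,17}^{-1}$ and $L_{8,21}$.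
   Context: All Lie algebras are over $\mathbb{R}$. Unlisted brackets $[X_i,X_j]$, $i<j$, are zero; the others follow by antisymmetry. Contraction: for a Lie algebra $(V,[\cdot,\cdot])$ and nonsingular linear maps $\Phi_t$, $t\in[1,\infty)$, if $[X,Y]_\infty=\lim_{t\to\infty}\Phi_t^{-1}[\Phi_tX,\Phi_tY]$ exists for all $X,Y$, any Lie algebra isomorphic to $(V,[\cdot,\cdot]_\infty)$ is a contraction of $(V,[\cdot,\cdot])$. $\mathfrak{su}(3)$, $\mathfrak{su}(2,1)$, $\mathfrak{sl}(3,\mathbb{R})$ are the real forms of the complex simple Lie algebra $\mathfrak{sl}(3,\mathbb{C})$. *)

(* Defs.v *)
From HB Require Import structures.
From mathcomp Require Import all_boot all_order all_algebra.
From mathcomp Require Import complex.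
From mathcomp Require Import all_classical all_reals topology normedtype.
Set Implicit Arguments. Unset Strict Implicit. Unset Printing Implicit Defensive.
Import Order.TTheory GRing.Theory Num.Theory.
Import numFieldNormedType.Exports.
Local Open Scope classical_set_scope.
Local Open Scope ring_scope.

(* The basis vector X_k of the paper is the k-th unit column, so that  *)
(* paper index k (1..8) corresponds to the ordinal k-1.                *)

Definition bracket (R : realType) := 'cV[R]_8 -> 'cV[R]_8 -> 'cV[R]_8.

(* A list of structure constants: (i, j, k, c) means C_{ij}^k = c,
   with 1-based indices and i < j; the others follow by antisymmetry
   and unlisted ones are zero. *)
Definition sc_table (R : realType) := seq (nat * nat * nat * R).

Definition sc_coef (R : realType) (l : sc_table R) (i j k : nat) : R :=
  \sum_(e <- l | (e.1.1.1 == i) && (e.1.1.2 == j) && (e.1.2 == k)) e.2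
  - \sum_(e <- l | (e.1.1.1 == j) && (e.1.1.2 == i) && (e.1.2 == k)) e.2.

Definition sc_bracket (R : realType) (l : sc_table R) : bracket R :=
  fun x y => \col_(k < 8)
    \sum_(i < 8) \sum_(j < 8) x i 0 * y j 0 * sc_coef l i.+1 j.+1 k.+1.

Definition lie_iso (R : realType) (b1 b2 : bracket R) : Prop :=
  exists P : 'M[R]_8, P \in unitmx /\
    forall x y, P *m b1 x y = b2 (P *m x) (P *m y).

(* Contraction (definition in the context): nonsingular Phi_t, t in [1,oo),
   such that [x,y]_oo = lim_{t->oo} Phi_t^{-1}[Phi_t x, Phi_t y] exists
   for all x, y (limits in R^8 taken coordinatewise), and the target is
   isomorphic to (R^8, [.,.]_oo).  Values of Phi for t < 1 are irrelevant. *)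
Definition contracts_onto (R : realType) (b target : bracket R) : Prop :=
  exists Phi : R -> 'M[R]_8,
    (forall t : R, 1 <= t -> Phi t \in unitmx) /\
    exists binf : bracket R,
      (forall (x y : 'cV[R]_8) (k : 'I_8),
         (fun t : R => (invmx (Phi t) *m b (Phi t *m x) (Phi t *m y)) k 0)
           @ +oo --> binf x y k 0) /\
      lie_iso binf target.

Definition conj_tr (R : realType) (A : 'M[R[i]]_3) : 'M[R[i]]_3 :=
  (map_mx (@conjc R) A)^T.

Definition su3 (R : realType) (A : 'M[R[i]]_3) : Prop :=
  conj_tr A = - A /\ \tr A = 0.

Definition J21 (R : realType) : 'M[R[i]]_3 :=
  \matrix_(i < 3, j < 3) (if i == j then (if val i == 2%N then -1 else 1) else 0).

Definition su21 (R : realType) (A : 'M[R[i]]_3) : Prop :=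
  conj_tr A *m J21 R + J21 R *m A = 0 /\ \tr A = 0.

Definition sl3R (R : realType) (A : 'M[R]_3) : Prop := \tr A = 0.

Definition iso_to_cmx (R : realType) (g : 'M[R[i]]_3 -> Prop) (b : bracket R) : Prop :=
  exists f : 'cV[R]_8 -> 'M[R[i]]_3,
    (forall (a : R) x y, f (a *: x + y) = ((a%:C)%C) *: f x + f y) /\
    injective f /\
    (forall x, g (f x)) /\
    (forall A, g A -> exists x, f x = A) /\
    (forall x y, f (b x y) = f x *m f y - f y *m f x).

Definition iso_to_rmx (R : realType) (g : 'M[R]_3 -> Prop) (b : bracket R) : Prop :=
  exists f : 'cV[R]_8 -> 'M[R]_3,
    (forall (a : R) x y, f (a *: x + y) = a *: f x + f y) /\
    injective f /\
    (forall x, g (f x)) /\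
    (forall A, g A -> exists x, f x = A) /\
    (forall x y, f (b x y) = f x *m f y - f y *m f x).

Definition su3_contracts_onto (R : realType) (L : bracket R) : Prop :=
  exists b : bracket R, iso_to_cmx (@su3 R) b /\ contracts_onto b L.
Definition su21_contracts_onto (R : realType) (L : bracket R) : Prop :=
  exists b : bracket R, iso_to_cmx (@su21 R) b /\ contracts_onto b L.
Definition sl3R_contracts_onto (R : realType) (L : bracket R) : Prop :=
  exists b : bracket R, iso_to_rmx (@sl3R R) b /\ contracts_onto b L.

Definition sc (R : realType) (i j k : nat) (c : R) : nat * nat * nat * R :=
  (i, j, k, c).
Arguments sc {R} i%_N j%_N k%_N c%_R.

Section Tables.
Variable R : realType.
Local Notation h := (2^-1 : R).

Definition tabA : sc_table R :=
  [:: sc 2 3 1 (1); sc 1 2 3 (1); sc 1 3 2 (-1); sc 1 4 7 (h); sc 1 5 6 (h); sc 1 6 5 (-h);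
      sc 1 7 4 (-h); sc 2 4 5 (h); sc 2 5 4 (-h); sc 2 6 7 (h); sc 2 7 6 (-h); sc 3 4 6 (h);
      sc 3 5 7 (-h); sc 3 6 4 (-h); sc 3 7 5 (h)].

Definition tabB : sc_table R :=
  [:: sc 1 2 2 (2); sc 1 3 3 (-2); sc 2 3 1 (1); sc 1 4 4 (1); sc 1 5 5 (-1); sc 2 5 4 (1);
      sc 3 4 5 (1); sc 1 6 6 (1); sc 1 7 7 (-1); sc 2 7 6 (1); sc 3 6 7 (1)].

Definition L8_2 : bracket R :=
  sc_bracket (tabA ++ [:: sc 4 5 8 (1); sc 6 7 8 (-1)]).

Definition L8_4_0 : bracket R :=
  sc_bracket (tabA ++ [:: sc 4 8 6 (-1); sc 5 8 7 (-1); sc 6 8 4 (1); sc 7 8 5 (1)]).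

Definition L8_5 : bracket R :=
  sc_bracket
    [:: sc 2 3 1 (1); sc 1 2 3 (1); sc 1 3 2 (-1); sc 1 4 7 (h); sc 1 5 6 (-h); sc 1 6 5 (2);
        sc 1 6 8 (-1); sc 1 7 4 (-2); sc 1 8 6 (3); sc 2 4 6 (h); sc 2 5 7 (h); sc 2 6 4 (-2);
        sc 2 7 5 (-2); sc 2 7 8 (-1); sc 2 8 7 (3); sc 3 4 5 (2); sc 3 5 4 (-2); sc 3 6 7 (1);
        sc 3 7 6 (-1)].

Definition L8_13 (eps : R) : bracket R :=
  sc_bracket (tabB ++ [:: sc 4 5 8 (1); sc 6 7 8 (eps)]).

Definition L8_14 : bracket R :=
  sc_bracket (tabB ++ [:: sc 6 8 4 (1); sc 7 8 5 (1)]).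

Definition L8_15 : bracket R :=
  sc_bracket (tabB ++ [:: sc 6 7 8 (1); sc 6 8 4 (1); sc 7 8 5 (1)]).

Definition L8_17_m1 : bracket R :=
  sc_bracket (tabB ++ [:: sc 4 8 4 (1); sc 5 8 5 (1); sc 6 8 6 (-1); sc 7 8 7 (-1)]).

Definition L8_18_0 : bracket R :=
  sc_bracket (tabB ++ [:: sc 4 8 6 (-1); sc 5 8 7 (-1); sc 6 8 4 (1); sc 7 8 5 (1)]).

Definition L8_21 : bracket R :=
  sc_bracket
    [:: sc 1 2 2 (2); sc 1 3 3 (-2); sc 2 3 1 (1); sc 1 4 4 (4); sc 1 5 5 (2); sc 1 7 7 (-2);
        sc 1 8 8 (-4); sc 2 5 4 (4); sc 2 6 5 (3); sc 2 7 6 (2); sc 2 8 7 (1); sc 3 4 5 (1);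
        sc 3 5 6 (2); sc 3 6 7 (3); sc 3 7 8 (4)].

End Tables.

(* Main.v *)
Require Import Defs.
From HB Require Import structures.
From mathcomp Require Import all_boot all_order all_algebra.
From mathcomp Require Import complex.
From mathcomp Require Import all_classical all_reals topology normedtype.
From mathcomp Require Import ring lra.
Import Order.TTheory GRing.Theory Num.Theory.
Import numFieldNormedType.Exports.
Local Open Scope classical_set_scope.
Local Open Scope ring_scope.
Set Implicit Arguments. Unset Strict Implicit. Unset Printing Implicit Defensive.
Definition brc (R : realType) (c : 'I_8 -> 'I_8 -> 'I_8 -> R) : bracket R :=
  fun x y => \col_(k < 8) \sum_(a < 8) \sum_(b < 8) x a 0 * y b 0 * c a b k.

Lemma sc_bracket_brc (R : realType) (l : sc_table R) :
  sc_bracket l = brc (fun a b k => sc_coef l a.+1 b.+1 k.+1).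
Proof. by []. Qed.

Lemma brc_ext (R : realType) (c c' : 'I_8 -> 'I_8 -> 'I_8 -> R) :
  (forall a b k, c a b k = c' a b k) -> brc c = brc c'.
Proof.
move=> h; apply: funext => x; apply: funext => y; apply/matrixP => k j.
by rewrite !mxE; apply: eq_bigr => a _; apply: eq_bigr => b _; rewrite h.
Qed.

Lemma brc_transform (R : realType) (M N : 'M[R]_8) c x y :
  M *m brc c (N *m x) (N *m y) =
  brc (fun a b k => \sum_(l < 8) M k l *
                    \sum_(i < 8) \sum_(j < 8) N i a * N j b * c i j l) x y.
Proof.
apply/matrixP => k j0; rewrite !mxE.
under eq_bigr do rewrite mxE.
set F := fun (l i j a b : 'I_8) => M k l * N i a * N j b * c i j l * x a 0 * y b 0.
transitivity (\sum_(l < 8) \sum_(i < 8) \sum_(j < 8) \sum_(a < 8) \sum_(b < 8) F l i j a b).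
  apply: eq_bigr => l _; rewrite mulr_sumr; apply: eq_bigr => i _.
  rewrite mulr_sumr; apply: eq_bigr => j _.
  rewrite !mxE big_distrlr mulr_suml mulr_sumr; apply: eq_bigr => a _.
  rewrite mulr_suml mulr_sumr; apply: eq_bigr => b _.
  rewrite /F /=; ring.
transitivity (\sum_(l < 8) \sum_(i < 8) \sum_(a < 8) \sum_(b < 8) \sum_(j < 8) F l i j a b).
  apply: eq_bigr => l _; apply: eq_bigr => i _; rewrite exchange_big.
  by apply: eq_bigr => a _; rewrite exchange_big.
transitivity (\sum_(l < 8) \sum_(a < 8) \sum_(b < 8) \sum_(i < 8) \sum_(j < 8) F l i j a b).
  apply: eq_bigr => l _; rewrite exchange_big.
  by apply: eq_bigr => a _; rewrite exchange_big.
rewrite exchange_big; apply: eq_bigr => a _.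
rewrite exchange_big; apply: eq_bigr => b _.
rewrite mulr_sumr; apply: eq_bigr => l _.
rewrite mulr_sumr mulr_sumr; apply: eq_bigr => i _.
rewrite mulr_sumr mulr_sumr; apply: eq_bigr => j _.
by rewrite /F; ring.
Qed.

Definition Dm (R : realType) (w : nat -> nat) (s : R) : 'M[R]_8 :=
  diag_mx (\row_(k < 8) s ^+ w k).

Lemma Dm_mul (R : realType) w (s : R) : s != 0 -> Dm w s *m Dm w s^-1 = 1%:M.
Proof.
move=> s0; rewrite /Dm mulmx_diag; apply/matrixP => i j; rewrite !mxE.
by rewrite exprVn mulfV ?expf_neq0.
Qed.

Lemma invmx_uniq (R : realType) (A B : 'M[R]_8) : A *m B = 1%:M -> invmx A = B.
Proof.
move=> AB; have [uA uB] := mulmx1_unit AB.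
by rewrite -[invmx A]mulmx1 -AB mulmxA mulVmx // mul1mx.
Qed.

Lemma Dm_inv (R : realType) w (s : R) : s != 0 -> invmx (Dm w s^-1) = Dm w s.
Proof.
move=> s0; apply: invmx_uniq; have h : s^-1 != 0 by rewrite invr_eq0.
by have := Dm_mul w h; rewrite invrK.
Qed.

Lemma Dm_unit (R : realType) w (s : R) : s != 0 -> Dm w s \in unitmx.
Proof. by move=> s0; have [] := mulmx1_unit (Dm_mul w s0). Qed.

Lemma contr_coef (R : realType) (M0 N0 : 'M[R]_8) c w (t : R) x y : t != 0 ->
  invmx (Dm w t^-1) *m (M0 *m brc c (N0 *m (Dm w t^-1 *m x)) (N0 *m (Dm w t^-1 *m y))) =
  brc (fun a b k => t ^+ w k * (t^-1 ^+ w a * t^-1 ^+ w b) *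
     \sum_(l < 8) M0 k l * \sum_(i < 8) \sum_(j < 8) N0 i a * N0 j b * c i j l) x y.
Proof.
move=> t0; rewrite Dm_inv // mulmxA !mulmxA brc_transform.
congr (brc _ x y); apply: funext => a; apply: funext => b; apply: funext => k.
rewrite mulr_sumr; apply: eq_bigr => l _.
rewrite /Dm mul_diag_mx !mxE mulr_sumr !mulr_sumr; apply: eq_bigr => i _.
rewrite !mulr_sumr; apply: eq_bigr => j _.
rewrite !mul_mx_diag !mxE; ring.
Qed.

Lemma lim_invpow (R : realType) n :
  (fun t : R => t^-1 ^+ n.+1) @ +oo --> (0 : R).
Proof.
elim: n => [|n IH].
  have : (fun t : R => t^-1) @ +oo --> (0 : R).
    apply/gtr0_cvgV0; first by near=> t.
    exact: cvg_id.
  by apply: cvg_trans; apply: near_eq_cvg; near=> t; rewrite expr1.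
have -> : (fun t : R => t^-1 ^+ n.+2) = (fun t => t^-1) \* (fun t => t^-1 ^+ n.+1).
  by apply: funext => t; rewrite exprS.
rewrite -(mulr0 (0 : R)); apply: cvgM => //.
apply/gtr0_cvgV0; first by near=> t.
exact: cvg_id.
Unshelve. all: by end_near.
Qed.

Lemma lim_term (R : realType) (wa wb wk : nat) (C : R) :
  (C != 0 -> (wk <= wa + wb)%N) ->
  (fun t : R => t ^+ wk * (t^-1 ^+ wa * t^-1 ^+ wb) * C) @ +oo -->
  (if wk == (wa + wb)%N then C else 0).
Proof.
move=> h; have [->|C0] := eqVneq C (0 : R).
  have -> : (fun t : R => t ^+ wk * (t^-1 ^+ wa * t^-1 ^+ wb) * 0) = (fun=> 0).
    by apply: funext => t; rewrite mulr0.
  by case: ifP => _; exact: cvg_cst.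
have le := h C0.
have E : forall t : R, t != 0 ->
    t ^+ wk * (t^-1 ^+ wa * t^-1 ^+ wb) = t^-1 ^+ (wa + wb - wk).
  move=> t t0; rewrite -exprD -{1}(subnK le) exprD mulrCA !exprVn mulfV ?mulr1 //.
  by rewrite expf_neq0.
case: ifP => [/eqP e|ne].
  have L : (fun=> C) @ (+oo : set_system R) --> C by exact: cvg_cst.
  apply: cvg_trans L; apply: near_eq_cvg; near=> t.
  by rewrite E ?e ?subnn ?expr0 ?mul1r // gt_eqF.
have [m hm] : exists m, (wa + wb - wk = m.+1)%N.
  exists (wa + wb - wk).-1; rewrite prednK // subn_gt0 ltn_neqAle le andbT.
  by rewrite ne.
rewrite -(mul0r C).
have L : (fun t : R => t^-1 ^+ (wa + wb - wk) * C) @ +oo --> 0 * C.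
  by rewrite hm; apply: cvgMl; exact: lim_invpow.
apply: cvg_trans L; apply: near_eq_cvg; near=> t.
by rewrite E // gt_eqF.
Unshelve. all: by end_near.
Qed.

Lemma cvg_bigsum (R : realType) (I : Type) (r : seq I) (f : I -> R -> R) (l : I -> R) :
  (forall i, f i @ +oo --> l i) ->
  (fun t => \sum_(i <- r) f i t) @ +oo --> \sum_(i <- r) l i.
Proof.
move=> h; elim: r => [|i r IH].
  have -> : (fun t : R => \sum_(i <- [::]) f i t) = (fun=> 0) by apply: funext => t; rewrite big_nil.
  by rewrite big_nil; exact: cvg_cst.
have -> : (fun t : R => \sum_(j <- i :: r) f j t) = f i + (fun t => \sum_(j <- r) f j t).
  by apply: funext => t; rewrite big_cons.
by rewrite big_cons; apply: cvgD.
Qed.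

Lemma lim_brc (R : realType) (w : nat -> nat) (C0 : 'I_8 -> 'I_8 -> 'I_8 -> R) x y k :
  (forall a b k, C0 a b k != 0 -> (w k <= w a + w b)%N) ->
  (fun t : R => (brc (fun a b k => t ^+ w k * (t^-1 ^+ w a * t^-1 ^+ w b) * C0 a b k) x y) k 0)
    @ +oo --> (brc (fun a b k => if w k == (w a + w b)%N then C0 a b k else 0) x y) k 0.
Proof.
move=> h; rewrite mxE.
have -> : (fun t : R => (brc (fun a b k => t ^+ w k * (t^-1 ^+ w a * t^-1 ^+ w b) * C0 a b k) x y) k 0)
  = (fun t => \sum_(a < 8) \sum_(b < 8) x a 0 * y b 0 * (t ^+ w k * (t^-1 ^+ w a * t^-1 ^+ w b) * C0 a b k)).
  by apply: funext => t; rewrite mxE.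
apply: cvg_bigsum => a; apply: cvg_bigsum => b.
by apply: cvgMr; apply: lim_term; exact: h.
Qed.

Lemma sum_id (R : realType) (F : 'I_8 -> R) (a : 'I_8) :
  \sum_(i < 8) (1%:M : 'M[R]_8) i a * F i = F a.
Proof.
rewrite (bigD1 a) //= big1 ?addr0; first by rewrite !mxE eqxx mul1r.
by move=> i /negbTE ne; rewrite !mxE ne mul0r.
Qed.

Lemma sum_id' (R : realType) (F : 'I_8 -> R) (a : 'I_8) :
  \sum_(i < 8) (1%:M : 'M[R]_8) a i * F i = F a.
Proof.
rewrite -[RHS](sum_id F); apply: eq_bigr => i _; rewrite !mxE eq_sym //.
Qed.

Lemma brc_left (R : realType) (M : 'M[R]_8) c x y :
  M *m brc c x y = brc (fun a b k => \sum_(l < 8) M k l * c a b l) x y.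
Proof.
have -> : brc c x y = brc c (1%:M *m x) (1%:M *m y) by rewrite !mul1mx.
rewrite brc_transform.
congr (brc _ x y); apply: funext => a; apply: funext => b; apply: funext => k.
apply: eq_bigr => l _; congr (_ * _).
rewrite -[RHS](sum_id (fun i => c i b l)); apply: eq_bigr => i _.
by rewrite -(sum_id (fun j => c i j l)) mulr_sumr; apply: eq_bigr => j _; rewrite mulrA.
Qed.

Lemma brc_right (R : realType) (N : 'M[R]_8) c x y :
  brc c (N *m x) (N *m y) = brc (fun a b k => \sum_(i < 8) \sum_(j < 8) N i a * N j b * c i j k) x y.
Proof.
rewrite -[LHS]mul1mx brc_transform.
congr (brc _ x y); apply: funext => a; apply: funext => b; apply: funext => k.
have -> := sum_id' (fun l => \sum_(i < 8) \sum_(j < 8) N i a * N j b * c i j l) k.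
done.
Qed.

Lemma lie_iso_brc (R : realType) cl cT (P Pi : 'M[R]_8) :
  P *m Pi = 1%:M ->
  (forall a b k, \sum_(l < 8) P k l * cl a b l = \sum_(i < 8) \sum_(j < 8) P i a * P j b * cT i j k) ->
  lie_iso (brc cl) (brc cT).
Proof.
move=> PPi h; exists P; split; first by have [] := mulmx1_unit PPi.
move=> x y; rewrite brc_left brc_right.
by congr (brc _ x y); apply: funext => a; apply: funext => b; apply: funext => k.
Qed.

Lemma contr_generic (R : realType) (M0 N0 : 'M[R]_8) c (w : nat -> nat) (L : bracket R) :
  let C0 := fun a b k : 'I_8 => \sum_(l < 8) M0 k l * \sum_(i < 8) \sum_(j < 8) N0 i a * N0 j b * c i j l in
  (forall a b k, C0 a b k != 0 -> (w k <= w a + w b)%N) ->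
  lie_iso (brc (fun a b k => if w k == (w a + w b)%N then C0 a b k else 0)) L ->
  contracts_onto (fun x y => M0 *m brc c (N0 *m x) (N0 *m y)) L.
Proof.
move=> C0 hw hiso; exists (fun t => Dm w t^-1); split.
  move=> t t1; apply: Dm_unit; rewrite invr_eq0; apply: lt0r_neq0.
  exact: lt_le_trans ltr01 t1.
exists (brc (fun a b k => if w k == (w a + w b)%N then C0 a b k else 0)); split => // x y k.
have L0 := lim_brc (x:=x) (y:=y) (k:=k) hw.
apply: cvg_trans L0; apply: near_eq_cvg; near=> t.
by rewrite /= contr_coef // gt_eqF.
Unshelve. all: by end_near.
Qed.

Definition qtab := seq (nat * nat * nat * rat).
Definition liftq (R : realType) (e : nat * nat * nat * rat) : nat * nat * nat * R :=
  (e.1, ratr e.2).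
Definition qget (M : seq (seq rat)) (i j : nat) : rat := nth 0 (nth [::] M i) j.
Definition mq (R : realType) (M : seq (seq rat)) : 'M[R]_8 :=
  \matrix_(i < 8, j < 8) ratr (qget M i j).

Definition sum8 (F : nat -> rat) : rat := foldr (fun l acc => F l + acc) 0 (iota 0 8).

Lemma sum8E (R : realType) (F : nat -> rat) :
  \sum_(l < 8) (ratr (F l) : R) = ratr (sum8 F).
Proof.
rewrite -(big_mkord xpredT (fun l => (ratr (F l) : R))) /index_iota subn0 /sum8.
elim: (iota 0 8) => [|a s IH]; first by rewrite big_nil rmorph0.
by rewrite big_cons IH rmorphD.
Qed.

Definition tsumq (l : qtab) (X Y : nat -> rat) (k : nat) : rat :=
  foldr (fun e acc => (if e.1.2 == k.+1 then
     e.2 * (X (e.1.1.1).-1 * Y (e.1.1.2).-1 - X (e.1.1.2).-1 * Y (e.1.1.1).-1) else 0) + acc) 0 l.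

Definition wfq (l : qtab) : bool :=
  all (fun e => (0 < e.1.1.1 <= 8)%N && (0 < e.1.1.2 <= 8)%N) l.

Lemma sum_pick (R : realType) (F : 'I_8 -> R) n : (0 < n <= 8)%N ->
  \sum_(i < 8) (if n == i.+1 then F i else 0) = F (inord n.-1).
Proof.
case/andP => n0 n8.
have h : (n.-1 < 8)%N by rewrite -ltnS prednK.
rewrite (bigD1 (inord n.-1)) //= inordK // prednK // eqxx big1 ?addr0 //.
move=> i ne; case: ifP => // /eqP e; exfalso; move: ne.
by rewrite -val_eqE /= inordK // e /= eqxx.
Qed.

Lemma sc_coef_cons (R : realType) (e : nat * nat * nat * R) l i j k :
  sc_coef (e :: l) i j k =
  (if (e.1.1.1 == i) && (e.1.1.2 == j) && (e.1.2 == k) then e.2 else 0)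
  - (if (e.1.1.1 == j) && (e.1.1.2 == i) && (e.1.2 == k) then e.2 else 0)
  + sc_coef l i j k.
Proof.
rewrite /sc_coef !big_cons.
by case: ifP => _; case: ifP => _; rewrite ?add0r ?subr0 ?opprD; ring.
Qed.

Lemma sc_coef_nil (R : realType) i j k : sc_coef ([::] : sc_table R) i j k = 0.
Proof. by rewrite /sc_coef !big_nil subr0. Qed.

Lemma table_sum (R : realType) (l : sc_table R) (X Y : 'I_8 -> R) (k : 'I_8) :
  all (fun e => (0 < e.1.1.1 <= 8)%N && (0 < e.1.1.2 <= 8)%N) l ->
  \sum_(i < 8) \sum_(j < 8) X i * Y j * sc_coef l i.+1 j.+1 k.+1 =
  \sum_(e <- l) (if e.1.2 == k.+1 then
     e.2 * (X (inord (e.1.1.1).-1) * Y (inord (e.1.1.2).-1)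
            - X (inord (e.1.1.2).-1) * Y (inord (e.1.1.1).-1)) else 0).
Proof.
elim: l => [|e l IH] /=.
  rewrite big_nil big1 // => i _; rewrite big1 // => j _.
  by rewrite sc_coef_nil mulr0.
case/andP => /andP [hi hj] hl; rewrite big_cons -IH //.
move: hi hj; case: e => [[[ei ej] ek] c] /= hi hj.
have hA : forall (u v : nat), (0 < u <= 8)%N -> (0 < v <= 8)%N ->
  \sum_(i < 8) \sum_(j < 8) X i * Y j * (if (u == i.+1) && (v == j.+1) && (ek == k.+1) then c else 0)
  = if ek == k.+1 then c * (X (inord u.-1) * Y (inord v.-1)) else 0.
  move=> u v hu hv; case: (ek == k.+1); last first.
    by rewrite big1 // => i _; rewrite big1 // => j _; rewrite andbF mulr0.
  transitivity (\sum_(i < 8) (if u == i.+1 then X i * \sum_(j < 8) (if v == j.+1 then Y j * c else 0) else 0)).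
    apply: eq_bigr => i _; case: (u == i.+1) => /=; last first.
      by rewrite big1 // => j _; rewrite mulr0.
    rewrite mulr_sumr; apply: eq_bigr => j _; rewrite andbT.
    by case: (v == j.+1); rewrite ?mulr0 // mulrA.
  rewrite (sum_pick (fun i => X i * \sum_(j < 8) (if v == j.+1 then Y j * c else 0))) //.
  by rewrite (sum_pick (fun j => Y j * c)) //; ring.
have -> : \sum_(i < 8) \sum_(j < 8) X i * Y j * sc_coef ((ei, ej, ek, c) :: l) i.+1 j.+1 k.+1 =
   \sum_(i < 8) \sum_(j < 8) X i * Y j * (if (ei == i.+1) && (ej == j.+1) && (ek == k.+1) then c else 0)
 - \sum_(i < 8) \sum_(j < 8) X i * Y j * (if (ej == i.+1) && (ei == j.+1) && (ek == k.+1) then c else 0)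
 + \sum_(i < 8) \sum_(j < 8) X i * Y j * sc_coef l i.+1 j.+1 k.+1.
  rewrite -sumrB -big_split /=; apply: eq_bigr => i _.
  rewrite -sumrB -big_split /=; apply: eq_bigr => j _.
  by rewrite sc_coef_cons /= [(ei == j.+1) && _]andbC; ring.
rewrite hA // hA //.
by case: (ek == k.+1); rewrite ?subr0 ?addr0 //; ring.
Qed.

Lemma tsumqE (R : realType) (l : qtab) (X Y : nat -> rat) (Xr Yr : 'I_8 -> R) (k : 'I_8) :
  wfq l -> (forall i : 'I_8, Xr i = ratr (X i)) -> (forall i : 'I_8, Yr i = ratr (Y i)) ->
  \sum_(i < 8) \sum_(j < 8) Xr i * Yr j * sc_coef (map (@liftq R) l) i.+1 j.+1 k.+1 =
  ratr (tsumq l X Y k).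
Proof.
move=> wf hX hY; rewrite table_sum; last by rewrite all_map.
rewrite big_map; elim: l wf => [|e l IH] /=; first by rewrite big_nil rmorph0.
case/andP => /andP [/andP [i0 i8] /andP [j0 j8]] wf.
rewrite big_cons IH // rmorphD; congr (_ + _).
have hi : (e.1.1.1.-1 < 8)%N by rewrite -ltnS prednK.
have hj : (e.1.1.2.-1 < 8)%N by rewrite -ltnS prednK.
case: ifP => _; last by rewrite rmorph0.
by rewrite !hX !hY !inordK // rmorphM rmorphB !rmorphM.
Qed.

Definition Cq (Q Qi : seq (seq rat)) (Ts : qtab) (a b k : nat) : rat :=
  sum8 (fun l => qget Qi k l * tsumq Ts (fun i => qget Q i a) (fun j => qget Q j b) l).

Lemma CqE (R : realType) Q Qi Ts (a b k : 'I_8) : wfq Ts ->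
  \sum_(l < 8) (mq R Qi) k l * \sum_(i < 8) \sum_(j < 8) (mq R Q) i a * (mq R Q) j b *
      sc_coef (map (@liftq R) Ts) i.+1 j.+1 l.+1 = ratr (Cq Q Qi Ts a b k).
Proof.
move=> wf; rewrite /Cq -sum8E; apply: eq_bigr => l _.
by rewrite mxE (tsumqE (X := fun i => qget Q i a) (Y := fun j => qget Q j b)) ?rmorphM // => i; rewrite mxE.
Qed.

Definition iota8 := iota 0 8.
Definition allabk (f : nat -> nat -> nat -> bool) : bool :=
  all (fun a => all (fun b => all (fun k => f a b k) iota8) iota8) iota8.

Lemma allabkP f : allabk f -> forall a b k : 'I_8, f a b k.
Proof.
move=> h a b k; have mem : forall i : 'I_8, (val i \in iota8) by move=> i; rewrite mem_iota /=.
by move: h => /allP /(_ _ (mem a)) /allP /(_ _ (mem b)) /allP /(_ _ (mem k)).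
Qed.

Definition allij (f : nat -> nat -> bool) : bool :=
  all (fun i => all (fun j => f i j) iota8) iota8.

Lemma allijP f : allij f -> forall i j : 'I_8, f i j.
Proof.
move=> h i j; have mem : forall i0 : 'I_8, (val i0 \in iota8) by move=> i0; rewrite mem_iota /=.
by move: h => /allP /(_ _ (mem i)) /allP /(_ _ (mem j)).
Qed.

Definition inv8 (A B : seq (seq rat)) : bool :=
  allij (fun i j => sum8 (fun l => qget A i l * qget B l j) == (i == j)%:R).

Lemma inv8P (R : realType) A B : inv8 A B -> mq R A *m mq R B = 1%:M.
Proof.
move=> /allijP h; apply/matrixP => i j; rewrite !mxE.
under eq_bigr do rewrite !mxE -rmorphM.
transitivity (ratr (sum8 (fun l => qget A i l * qget B l j)) : R); first exact: (sum8E R (fun l => qget A i l * qget B l j)).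
by rewrite (eqP (h i j)) rmorph_nat.
Qed.

Definition wget (w : seq nat) (i : nat) : nat := nth 0%N w i.

Definition chk (Ts Tt : qtab) (Q Qi P Pi : seq (seq rat)) (w : seq nat) : bool :=
  [&& wfq Ts, wfq Tt, inv8 Q Qi, inv8 Qi Q, inv8 P Pi,
   allabk (fun a b k => (Cq Q Qi Ts a b k != 0) ==> (wget w k <= wget w a + wget w b)%N) &
   allabk (fun a b k =>
     sum8 (fun l => qget P k l *
        (if wget w l == (wget w a + wget w b)%N then Cq Q Qi Ts a b l else 0))
     == tsumq Tt (fun i => qget P i a) (fun j => qget P j b) k)].

Lemma chk_contr (R : realType) Ts Tt Q Qi P Pi w : chk Ts Tt Q Qi P Pi w ->
  contracts_onto (fun x y => mq R Qi *m sc_bracket (map (@liftq R) Ts) (mq R Q *m x) (mq R Q *m y))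
                 (sc_bracket (map (@liftq R) Tt)).
Proof.
move=> /andP[wfs /andP[wft /andP[_ /andP[_ /andP[hP /andP[/allabkP hw /allabkP hi]]]]]].
rewrite !sc_bracket_brc; apply: (contr_generic (w := wget w)).
  move=> a b k; rewrite CqE // fmorph_eq0 => ne; exact: (implyP (hw a b k) ne).
apply: (lie_iso_brc (P := mq R P) (Pi := mq R Pi)); first exact: inv8P.
move=> a b k.
rewrite (tsumqE (X := fun i => qget P i a) (Y := fun j => qget P j b)) //; last first.
  by move=> i; rewrite mxE.
  by move=> i; rewrite mxE.
rewrite -(eqP (hi a b k)) -sum8E; apply: eq_bigr => l _.
rewrite mxE CqE // rmorphM; congr (_ * _).
by case: ifP; rewrite ?rmorph0.
Qed.
Local Open Scope complex_scope.
Definition phiq (R : realType) (z : rat[i]) : R[i] := (ratr (complex.Re z)) +i* (ratr (complex.Im z)).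

Lemma phiqD (R : realType) z w : phiq R (z + w) = phiq R z + phiq R w.
Proof. by case: z => a b; case: w => c d; rewrite /phiq /=; simpc; rewrite !rmorphD. Qed.
Lemma phiqN (R : realType) z : phiq R (- z) = - phiq R z.
Proof. by case: z => a b; rewrite /phiq /=; simpc; rewrite !rmorphN. Qed.
Lemma phiqM (R : realType) z w : phiq R (z * w) = phiq R z * phiq R w.
Proof. by case: z => a b; case: w => c d; rewrite /phiq /=; simpc; rewrite !(rmorphB, rmorphD, rmorphM). Qed.
Lemma phiq0 (R : realType) : phiq R 0 = 0.
Proof. by rewrite /phiq /= rmorph0. Qed.
Lemma phiqC (R : realType) (q : rat) : phiq R (q%:C) = (ratr q)%:C.
Proof. by rewrite /phiq /= rmorph0. Qed.
Lemma phiq_conj (R : realType) z : phiq R (conjc z) = conjc (phiq R z).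
Proof. by case: z => a b; rewrite /phiq /= rmorphN. Qed.

Definition fsum (V : nmodType) (n : nat) (F : nat -> V) : V :=
  foldr (fun l acc => F l + acc) 0 (iota 0 n).

Lemma fsumE (V : nmodType) n (F : nat -> V) : \sum_(l < n) F l = fsum n F.
Proof.
rewrite -(big_mkord xpredT F) /index_iota subn0 /fsum.
by elim: (iota 0 n) => [|a s IH]; rewrite ?big_nil ?big_cons ?IH.
Qed.

Lemma phiq_fsum (R : realType) n (F : nat -> rat[i]) :
  phiq R (fsum n F) = fsum n (fun l => phiq R (F l)).
Proof. rewrite /fsum; elim: (iota 0 n) => [|a s IH] /=; by rewrite ?phiq0 ?phiqD ?IH. Qed.

Definition scq (T : qtab) (i j k : nat) : rat :=
  foldr (fun e acc => (if (e.1.1.1 == i) && (e.1.1.2 == j) && (e.1.2 == k) then e.2 else 0)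
     - (if (e.1.1.1 == j) && (e.1.1.2 == i) && (e.1.2 == k) then e.2 else 0) + acc) 0 T.

Lemma scqE (R : realType) T i j k : sc_coef (map (@liftq R) T) i j k = ratr (scq T i j k).
Proof.
elim: T => [|e T IH] /=; first by rewrite sc_coef_nil rmorph0.
rewrite sc_coef_cons IH /= rmorphD rmorphB.
by case: ifP => _; case: ifP => _; rewrite ?rmorph0.
Qed.

Definition cdata := seq (seq (rat * rat)).
Definition fget (D : cdata) (k i j : nat) : rat[i] :=
  let p := nth (0, 0) (nth [::] D k) (3 * i + j) in p.1 +i* p.2.
Definition Fm (R : realType) (D : cdata) (k : nat) : 'M[R[i]]_3 :=
  \matrix_(i < 3, j < 3) phiq R (fget D k i j).
Definition fmap (R : realType) (D : cdata) (x : 'cV[R]_8) : 'M[R[i]]_3 :=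
  \sum_(k < 8) (x k 0)%:C *: Fm R D k.

Definition all8 (f : nat -> bool) := all f (iota 0 8).
Definition all3 (f : nat -> bool) := all f (iota 0 3).
Lemma all8P f : all8 f -> forall k : 'I_8, f k.
Proof. by move=> /allP h k; apply: h; rewrite mem_iota /=. Qed.
Lemma all3P f : all3 f -> forall k : 'I_3, f k.
Proof. by move=> /allP h k; apply: h; rewrite mem_iota /=. Qed.

Definition brk_chk (D : cdata) (T : qtab) : bool :=
  all8 (fun a => all8 (fun b => all3 (fun i => all3 (fun j =>
    fsum 3 (fun l => fget D a i l * fget D b l j) - fsum 3 (fun l => fget D b i l * fget D a l j)
    == fsum 8 (fun k => (scq T a.+1 b.+1 k.+1)%:C * fget D k i j))))).

Lemma brk_ok (R : realType) D T : brk_chk D T -> forall a b : 'I_8,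
  Fm R D a *m Fm R D b - Fm R D b *m Fm R D a =
  \sum_(k < 8) (ratr (scq T a.+1 b.+1 k.+1))%:C *: Fm R D k.
Proof.
move=> h a b; apply/matrixP => i j.
have := all3P (all3P (all8P (all8P h a) b) i) j => /eqP e.
rewrite !mxE summxE.
under eq_bigr do rewrite !mxE.
under [X in _ - X = _]eq_bigr do rewrite !mxE.
under [RHS]eq_bigr do rewrite !mxE -phiqC -phiqM.
rewrite (@fsumE _ 3 (fun l => phiq R (fget D a i l) * phiq R (fget D b l j))).
rewrite (@fsumE _ 3 (fun l => phiq R (fget D b i l) * phiq R (fget D a l j))).
rewrite (@fsumE _ 8 (fun k => phiq R ((scq T a.+1 b.+1 k.+1)%:C * fget D k i j))).
rewrite -phiq_fsum -e phiqD phiqN !phiq_fsum.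
by congr (fsum _ _ - fsum _ _); apply: funext => l; rewrite phiqM.
Qed.

Lemma fmap_lin (R : realType) D (a : R) x y :
  fmap D (a *: x + y) = (a%:C) *: fmap D x + fmap D y.
Proof.
rewrite /fmap scaler_sumr -big_split; apply: eq_bigr => k _ /=.
by rewrite !mxE rmorphD rmorphM scalerDl scalerA.
Qed.

Lemma fmap_br (R : realType) D T : brk_chk D T -> forall x y,
  fmap D (sc_bracket (map (@liftq R) T) x y) = fmap D x *m fmap D y - fmap D y *m fmap D x.
Proof.
move=> h x y.
have E1 : fmap D x *m fmap D y =
   \sum_(a < 8) \sum_(b < 8) ((x a 0 * y b 0)%:C) *: (Fm R D a *m Fm R D b).
  rewrite /fmap mulmx_suml; apply: eq_bigr => a _; rewrite mulmx_sumr; apply: eq_bigr => b _.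
  by rewrite -scalemxAl -scalemxAr scalerA rmorphM.
have E2 : fmap D y *m fmap D x =
   \sum_(a < 8) \sum_(b < 8) ((x a 0 * y b 0)%:C) *: (Fm R D b *m Fm R D a).
  rewrite /fmap mulmx_suml exchange_big; apply: eq_bigr => a _.
  rewrite mulmx_sumr; apply: eq_bigr => b _.
  by rewrite -scalemxAl -scalemxAr scalerA rmorphM mulrC.
rewrite E1 E2 -sumrB.
under [RHS]eq_bigr do rewrite -sumrB.
under [RHS]eq_bigr do under eq_bigr do rewrite -scalerBr (brk_ok R h) scaler_sumr.
rewrite /fmap /sc_bracket.
rewrite (eq_bigr (fun k : 'I_8 => ((\sum_(a < 8) \sum_(b < 8) x a 0 * y b 0 * sc_coef (map (@liftq R) T) a.+1 b.+1 k.+1)%:C) *: Fm R D k)); last by move=> k _; rewrite mxE.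
under eq_bigr do rewrite raddf_sum scaler_suml.
under eq_bigr do under eq_bigr do rewrite raddf_sum scaler_suml.
rewrite exchange_big; apply: eq_bigr => a _.
rewrite exchange_big; apply: eq_bigr => b _.
apply: eq_bigr => k _.
by rewrite scalerA -rmorphM scqE mulrA.
Qed.

Lemma conj_trE (R : realType) (A : 'M[R[i]]_3) i j : conj_tr A i j = conjc (A j i).
Proof. by rewrite /conj_tr !mxE. Qed.

Lemma conj_tr_lin (R : realType) (a : R) (A B : 'M[R[i]]_3) :
  conj_tr (a%:C *: A + B) = a%:C *: conj_tr A + conj_tr B.
Proof.
apply/matrixP => i j; rewrite /conj_tr !mxE.
case: (A j i) => a1 b1; case: (B j i) => a2 b2; rewrite /real_complex_def /conjc; by simpc.
Qed.

Lemma conj_tr0 (R : realType) : conj_tr (0 : 'M[R[i]]_3) = 0.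
Proof. by apply/matrixP => i j; rewrite conj_trE !mxE rmorph0. Qed.

Lemma big_closed (R : realType) (P : 'M[R[i]]_3 -> Prop) (F : 'I_8 -> 'M[R[i]]_3) (x : 'cV[R]_8) :
  P 0 -> (forall (a : R) A B, P A -> P B -> P (a%:C *: A + B)) -> (forall k, P (F k)) ->
  P (\sum_(k < 8) (x k 0)%:C *: F k).
Proof.
move=> P0 PC PF; elim/big_rec: _ => // k A _ PA.
by apply: PC.
Qed.

Lemma su3_closed (R : realType) (a : R) A B : su3 A -> su3 B -> su3 (a%:C *: A + B).
Proof.
move=> [hA tA] [hB tB]; split; first by rewrite conj_tr_lin hA hB scalerN opprD.
by rewrite mxtraceD mxtraceZ tA tB mulr0 addr0.
Qed.

Lemma su3_0 (R : realType) : su3 (0 : 'M[R[i]]_3).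
Proof. by split; rewrite ?conj_tr0 ?oppr0 // mxtrace0. Qed.

Definition su3_chk (D : cdata) : bool :=
  all8 (fun k => all3 (fun i => all3 (fun j => conjc (fget D k j i) == - fget D k i j)))
  && all8 (fun k => fsum 3 (fun i => fget D k i i) == 0).

Lemma trace_phiq (R : realType) D k : \tr (Fm R D k) = phiq R (fsum 3 (fun i => fget D k i i)).
Proof.
rewrite /mxtrace; under eq_bigr do rewrite mxE.
by rewrite (@fsumE _ 3 (fun i => phiq R (fget D k i i))) phiq_fsum.
Qed.

Lemma su3_fmap (R : realType) D (x : 'cV[R]_8) : su3_chk D -> su3 (fmap D x).
Proof.
move=> /andP [h1 h2]; apply: big_closed; [exact: su3_0 | exact: su3_closed |] => k; split.
  apply/matrixP => i j; rewrite /conj_tr !mxE -phiq_conj -phiqN.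
  by rewrite (eqP (all3P (all3P (all8P h1 k) i) j)).
by rewrite trace_phiq (eqP (all8P h2 k)) phiq0.
Qed.

Definition cidx : seq (nat * nat * bool) :=
  [:: (0, 0, true); (1, 1, true); (0, 1, false); (0, 1, true);
      (0, 2, false); (0, 2, true); (1, 2, false); (1, 2, true)]%N.
Definition cpart (R : pzRingType) (b : bool) (z : R[i]) : R :=
  if b then complex.Im z else complex.Re z.
Definition cm (R : realType) (A : 'M[R[i]]_3) (k : nat) : R :=
  let: (i, j, b) := nth (0, 0, false)%N cidx k in cpart b (A (inord i) (inord j)).
Definition cmapc (R : realType) (A : 'M[R[i]]_3) : 'cV[R]_8 := \col_(k < 8) cm A k.

Definition coord_chk (D : cdata) : bool :=
  all8 (fun k' => all8 (fun k =>
    (let: (i, j, b) := nth (0, 0, false)%N cidx k in cpart b (fget D k' i j)) == (k' == k)%:R)).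

Lemma fmap_entry (R : realType) D (x : 'cV[R]_8) (i j : nat) : (i < 3)%N -> (j < 3)%N ->
  fmap D x (inord i) (inord j) = \sum_(k < 8) (x k 0)%:C * phiq R (fget D k i j).
Proof.
move=> hi hj; rewrite /fmap summxE; apply: eq_bigr => k _.
by rewrite !mxE !inordK.
Qed.

Lemma cpartD (R : realType) b (z w : R[i]) : cpart b (z + w) = cpart b z + cpart b w.
Proof. by case: b; case: z => ? ?; case: w => ? ?. Qed.

Lemma cpart_sum (R : realType) b (F : 'I_8 -> R[i]) :
  cpart b (\sum_(k < 8) F k) = \sum_(k < 8) cpart b (F k).
Proof.
elim/big_rec2: _ => [|k y1 y2 _ <-]; first by case: b.
by rewrite cpartD.
Qed.

Lemma cpartM (R : realType) b (a : R) (z : R[i]) : cpart b (a%:C * z) = a * cpart b z.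
Proof. by case: b; case: z => u v; rewrite /cpart /real_complex_def; simpc. Qed.

Lemma cpart_phiq (R : realType) b z : cpart b (phiq R z) = ratr (cpart b z).
Proof. by case: b. Qed.

Lemma cidx_ok k : (k < 8)%N -> let: (i, j, b) := nth (0, 0, false)%N cidx k in (i < 3)%N && (j < 3)%N.
Proof. by do 8! (case: k => [|k] //). Qed.

Lemma cmap_fmap (R : realType) D (x : 'cV[R]_8) : coord_chk D -> cmapc (fmap D x) = x.
Proof.
move=> h; apply/matrixP => k j0; rewrite (ord1 j0) mxE /cm.
have ok := cidx_ok (ltn_ord k).
have hc : forall k' : 'I_8, (let: (i, j, b) := nth (0, 0, false)%N cidx k in cpart b (fget D k' i j)) == (k' == k)%:R.
  by move=> k'; exact: (all8P (all8P h k') k).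
move: ok hc; case: (nth (0, 0, false)%N cidx k) => [[i j] b] /andP [hi hj] hc.
rewrite fmap_entry // cpart_sum.
under eq_bigr do rewrite cpartM cpart_phiq (eqP (hc _)).
rewrite (bigD1 k) //= big1 ?addr0; first by rewrite eqxx rmorph1 mulr1.
by move=> k' /negbTE ne; rewrite ne rmorph0 mulr0.
Qed.

Definition D_su3 : cdata :=
  [:: [:: ((0%:R), (1%:R)); ((0%:R), (0%:R)); ((0%:R), (0%:R)); ((0%:R), (0%:R)); ((0%:R), (0%:R)); ((0%:R), (0%:R)); ((0%:R), (0%:R)); ((0%:R), (0%:R)); ((0%:R), (-1%:R))];
      [:: ((0%:R), (0%:R)); ((0%:R), (0%:R)); ((0%:R), (0%:R)); ((0%:R), (0%:R)); ((0%:R), (1%:R)); ((0%:R), (0%:R)); ((0%:R), (0%:R)); ((0%:R), (0%:R)); ((0%:R), (-1%:R))];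
      [:: ((0%:R), (0%:R)); ((1%:R), (0%:R)); ((0%:R), (0%:R)); ((-1%:R), (0%:R)); ((0%:R), (0%:R)); ((0%:R), (0%:R)); ((0%:R), (0%:R)); ((0%:R), (0%:R)); ((0%:R), (0%:R))];
      [:: ((0%:R), (0%:R)); ((0%:R), (1%:R)); ((0%:R), (0%:R)); ((0%:R), (1%:R)); ((0%:R), (0%:R)); ((0%:R), (0%:R)); ((0%:R), (0%:R)); ((0%:R), (0%:R)); ((0%:R), (0%:R))];
      [:: ((0%:R), (0%:R)); ((0%:R), (0%:R)); ((1%:R), (0%:R)); ((0%:R), (0%:R)); ((0%:R), (0%:R)); ((0%:R), (0%:R)); ((-1%:R), (0%:R)); ((0%:R), (0%:R)); ((0%:R), (0%:R))];
      [:: ((0%:R), (0%:R)); ((0%:R), (0%:R)); ((0%:R), (1%:R)); ((0%:R), (0%:R)); ((0%:R), (0%:R)); ((0%:R), (0%:R)); ((0%:R), (1%:R)); ((0%:R), (0%:R)); ((0%:R), (0%:R))];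
      [:: ((0%:R), (0%:R)); ((0%:R), (0%:R)); ((0%:R), (0%:R)); ((0%:R), (0%:R)); ((0%:R), (0%:R)); ((1%:R), (0%:R)); ((0%:R), (0%:R)); ((-1%:R), (0%:R)); ((0%:R), (0%:R))];
      [:: ((0%:R), (0%:R)); ((0%:R), (0%:R)); ((0%:R), (0%:R)); ((0%:R), (0%:R)); ((0%:R), (0%:R)); ((0%:R), (1%:R)); ((0%:R), (0%:R)); ((0%:R), (1%:R)); ((0%:R), (0%:R))]].
Definition D_su21 : cdata :=
  [:: [:: ((0%:R), (1%:R)); ((0%:R), (0%:R)); ((0%:R), (0%:R)); ((0%:R), (0%:R)); ((0%:R), (0%:R)); ((0%:R), (0%:R)); ((0%:R), (0%:R)); ((0%:R), (0%:R)); ((0%:R), (-1%:R))];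
      [:: ((0%:R), (0%:R)); ((0%:R), (0%:R)); ((0%:R), (0%:R)); ((0%:R), (0%:R)); ((0%:R), (1%:R)); ((0%:R), (0%:R)); ((0%:R), (0%:R)); ((0%:R), (0%:R)); ((0%:R), (-1%:R))];
      [:: ((0%:R), (0%:R)); ((1%:R), (0%:R)); ((0%:R), (0%:R)); ((-1%:R), (0%:R)); ((0%:R), (0%:R)); ((0%:R), (0%:R)); ((0%:R), (0%:R)); ((0%:R), (0%:R)); ((0%:R), (0%:R))];
      [:: ((0%:R), (0%:R)); ((0%:R), (1%:R)); ((0%:R), (0%:R)); ((0%:R), (1%:R)); ((0%:R), (0%:R)); ((0%:R), (0%:R)); ((0%:R), (0%:R)); ((0%:R), (0%:R)); ((0%:R), (0%:R))];
      [:: ((0%:R), (0%:R)); ((0%:R), (0%:R)); ((1%:R), (0%:R)); ((0%:R), (0%:R)); ((0%:R), (0%:R)); ((0%:R), (0%:R)); ((1%:R), (0%:R)); ((0%:R), (0%:R)); ((0%:R), (0%:R))];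
      [:: ((0%:R), (0%:R)); ((0%:R), (0%:R)); ((0%:R), (1%:R)); ((0%:R), (0%:R)); ((0%:R), (0%:R)); ((0%:R), (0%:R)); ((0%:R), (-1%:R)); ((0%:R), (0%:R)); ((0%:R), (0%:R))];
      [:: ((0%:R), (0%:R)); ((0%:R), (0%:R)); ((0%:R), (0%:R)); ((0%:R), (0%:R)); ((0%:R), (0%:R)); ((1%:R), (0%:R)); ((0%:R), (0%:R)); ((1%:R), (0%:R)); ((0%:R), (0%:R))];
      [:: ((0%:R), (0%:R)); ((0%:R), (0%:R)); ((0%:R), (0%:R)); ((0%:R), (0%:R)); ((0%:R), (0%:R)); ((0%:R), (1%:R)); ((0%:R), (0%:R)); ((0%:R), (-1%:R)); ((0%:R), (0%:R))]].
Definition D_sl3R : seq (seq rat) :=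
  [:: [:: (1%:R); (0%:R); (0%:R); (0%:R); (0%:R); (0%:R); (0%:R); (0%:R); (-1%:R)];
      [:: (0%:R); (0%:R); (0%:R); (0%:R); (1%:R); (0%:R); (0%:R); (0%:R); (-1%:R)];
      [:: (0%:R); (1%:R); (0%:R); (0%:R); (0%:R); (0%:R); (0%:R); (0%:R); (0%:R)];
      [:: (0%:R); (0%:R); (1%:R); (0%:R); (0%:R); (0%:R); (0%:R); (0%:R); (0%:R)];
      [:: (0%:R); (0%:R); (0%:R); (1%:R); (0%:R); (0%:R); (0%:R); (0%:R); (0%:R)];
      [:: (0%:R); (0%:R); (0%:R); (0%:R); (0%:R); (1%:R); (0%:R); (0%:R); (0%:R)];
      [:: (0%:R); (0%:R); (0%:R); (0%:R); (0%:R); (0%:R); (1%:R); (0%:R); (0%:R)];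
      [:: (0%:R); (0%:R); (0%:R); (0%:R); (0%:R); (0%:R); (0%:R); (1%:R); (0%:R)]].
Definition T_su3 : seq (nat*nat*nat*rat) :=
  [:: (1, 3, 4, (1%:R)); (1, 4, 3, (-1%:R)); (1, 5, 6, (2%:R)); (1, 6, 5, (-2%:R)); (1, 7, 8, (1%:R)); (1, 8, 7, (-1%:R)); (2, 3, 4, (-1%:R)); (2, 4, 3, (1%:R)); (2, 5, 6, (1%:R)); (2, 6, 5, (-1%:R)); (2, 7, 8, (2%:R)); (2, 8, 7, (-2%:R)); (3, 4, 1, (2%:R)); (3, 4, 2, (-2%:R)); (3, 5, 7, (-1%:R)); (3, 6, 8, (-1%:R)); (3, 7, 5, (1%:R)); (3, 8, 6, (1%:R)); (4, 5, 8, (1%:R)); (4, 6, 7, (-1%:R)); (4, 7, 6, (1%:R)); (4, 8, 5, (-1%:R)); (5, 6, 1, (2%:R)); (5, 7, 3, (-1%:R)); (5, 8, 4, (1%:R)); (6, 7, 4, (-1%:R)); (6, 8, 3, (-1%:R)); (7, 8, 2, (2%:R))].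
Definition T_su21 : seq (nat*nat*nat*rat) :=
  [:: (1, 3, 4, (1%:R)); (1, 4, 3, (-1%:R)); (1, 5, 6, (2%:R)); (1, 6, 5, (-2%:R)); (1, 7, 8, (1%:R)); (1, 8, 7, (-1%:R)); (2, 3, 4, (-1%:R)); (2, 4, 3, (1%:R)); (2, 5, 6, (1%:R)); (2, 6, 5, (-1%:R)); (2, 7, 8, (2%:R)); (2, 8, 7, (-2%:R)); (3, 4, 1, (2%:R)); (3, 4, 2, (-2%:R)); (3, 5, 7, (-1%:R)); (3, 6, 8, (-1%:R)); (3, 7, 5, (1%:R)); (3, 8, 6, (1%:R)); (4, 5, 8, (1%:R)); (4, 6, 7, (-1%:R)); (4, 7, 6, (1%:R)); (4, 8, 5, (-1%:R)); (5, 6, 1, (-2%:R)); (5, 7, 3, (1%:R)); (5, 8, 4, (-1%:R)); (6, 7, 4, (1%:R)); (6, 8, 3, (1%:R)); (7, 8, 2, (-2%:R))].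
Definition T_sl3R : seq (nat*nat*nat*rat) :=
  [:: (1, 3, 3, (1%:R)); (1, 4, 4, (2%:R)); (1, 5, 5, (-1%:R)); (1, 6, 6, (1%:R)); (1, 7, 7, (-2%:R)); (1, 8, 8, (-1%:R)); (2, 3, 3, (-1%:R)); (2, 4, 4, (1%:R)); (2, 5, 5, (1%:R)); (2, 6, 6, (2%:R)); (2, 7, 7, (-1%:R)); (2, 8, 8, (-2%:R)); (3, 5, 1, (1%:R)); (3, 5, 2, (-1%:R)); (3, 6, 4, (1%:R)); (3, 7, 8, (-1%:R)); (4, 5, 6, (-1%:R)); (4, 7, 1, (1%:R)); (4, 8, 3, (1%:R)); (5, 8, 7, (-1%:R)); (6, 7, 5, (1%:R)); (6, 8, 2, (1%:R))].

Lemma sum3E (R : realType) (F : 'I_3 -> R[i]) :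
  \sum_(i < 3) F i = F (inord 0) + F (inord 1) + F (inord 2).
Proof.
rewrite !big_ord_recr big_ord0 /= add0r.
by congr (F _ + F _ + F _); apply: val_inj; rewrite /= inordK.
Qed.

Lemma complex_ext (R : Type) (z : R[i]) : z = complex.Re z +i* complex.Im z.
Proof. by case: z. Qed.

Lemma ord3_inord (i : 'I_3) : exists2 n, (n < 3)%N & i = inord n.
Proof. by exists (val i); rewrite ?ltn_ord ?inord_val. Qed.

Lemma su3_rel (R : realType) (A : 'M[R[i]]_3) : su3 A -> forall i j : 'I_3,
  complex.Re (A j i) = - complex.Re (A i j) /\ complex.Im (A j i) = complex.Im (A i j).
Proof.
case=> h _ i j; have := congr1 (fun M : 'M[R[i]]_3 => M i j) h; rewrite /conj_tr !mxE /=.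
by case: (A j i) => a b; case: (A i j) => c d /= [-> /eqP]; rewrite eqr_opp => /eqP ->.
Qed.

Lemma su3_tr (R : realType) (A : 'M[R[i]]_3) : su3 A ->
  complex.Re (A (inord 0) (inord 0)) + complex.Re (A (inord 1) (inord 1)) + complex.Re (A (inord 2) (inord 2)) = 0 /\
  complex.Im (A (inord 0) (inord 0)) + complex.Im (A (inord 1) (inord 1)) + complex.Im (A (inord 2) (inord 2)) = 0.
Proof.
case=> _; rewrite /mxtrace sum3E.
by case: (A (inord 0) (inord 0)) => ? ?; case: (A (inord 1) (inord 1)) => ? ?;
   case: (A (inord 2) (inord 2)) => ? ? [].
Qed.

Lemma su3_surj (R : realType) (A : 'M[R[i]]_3) : su3 A -> fmap D_su3 (cmapc A) = A.
Proof.
move=> hA.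
have r := su3_rel hA.
have [r00 r00'] := r (inord 0) (inord 0).
have [r11 r11'] := r (inord 1) (inord 1).
have [r22 r22'] := r (inord 2) (inord 2).
have [r01 r01'] := r (inord 0) (inord 1).
have [r02 r02'] := r (inord 0) (inord 2).
have [r12 r12'] := r (inord 1) (inord 2).
have [t1 t2] := su3_tr hA.
apply/matrixP => i j.
have [n hn ->] := ord3_inord i; have [m hm ->] := ord3_inord j.
rewrite fmap_entry //.
under eq_bigr do rewrite mxE.
rewrite (@fsumE _ 8 (fun k => (cm A k)%:C * phiq R (fget D_su3 k n m))).
rewrite [RHS]complex_ext.
case: n hn => [|[|[|//]]] _; case: m hm => [|[|[|//]]] _;
  rewrite /fsum /= /cm /= /cpart /phiq /= ?rmorph0 ?rmorph1 ?rmorphN ?rmorph_nat /real_complex_def;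
  simpc; congr Complex; rewrite ?mulr0n ?mulr1n; lra.
Qed.

Lemma iso_su3 (R : realType) : iso_to_cmx (@su3 R) (sc_bracket (map (@liftq R) T_su3)).
Proof.
have hc : coord_chk D_su3 by vm_compute.
exists (fmap D_su3); split; first exact: fmap_lin.
split; first by move=> x y e; rewrite -(cmap_fmap x hc) -(cmap_fmap y hc) e.
split; first by move=> x; apply: su3_fmap; vm_compute.
split; first by move=> A hA; exists (cmapc A); exact: su3_surj.
by apply: fmap_br; vm_compute.
Qed.

Lemma iso_cmx_transfer (R : realType) g (b : bracket R) (Q Qi : 'M[R]_8) :
  Q *m Qi = 1%:M -> Qi *m Q = 1%:M -> iso_to_cmx g b ->
  iso_to_cmx g (fun x y => Qi *m b (Q *m x) (Q *m y)).
Proof.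
move=> QQi QiQ [f [hl [hi [hg [hs hb]]]]].
exists (fun x => f (Q *m x)); split.
  by move=> a x y; rewrite mulmxDr -scalemxAr hl.
split; first by move=> x y /hi e; rewrite -[x]mul1mx -[y]mul1mx -QiQ -!mulmxA e.
split; first by move=> x; exact: hg.
split; first by move=> A /hs [x <-]; exists (Qi *m x); rewrite mulmxA QQi mul1mx.
by move=> x y; rewrite mulmxA QQi mul1mx hb.
Qed.


Lemma claim_cmx (R : realType) g Ts Tt Q Qi P Pi w :
  iso_to_cmx g (sc_bracket (map (@liftq R) Ts)) -> chk Ts Tt Q Qi P Pi w ->
  exists b : bracket R, iso_to_cmx g b /\ contracts_onto b (sc_bracket (map (@liftq R) Tt)).
Proof.
move=> hiso hc; exists (fun x y => mq R Qi *m sc_bracket (map (@liftq R) Ts) (mq R Q *m x) (mq R Q *m y)).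
split; last exact: (@chk_contr R _ _ _ _ _ _ _ hc).
move: hc => /andP[_ /andP[_ /andP[h1 /andP[h2 _]]]].
by apply: iso_cmx_transfer => //; apply: inv8P.
Qed.
Local Open Scope complex_scope.

Definition Jq (i j : nat) : rat[i] :=
  if i == j then (if i == 2%N then ((-1)%:C)%C else (1%:C)%C) else 0.

Lemma J21E (R : realType) (i j : 'I_3) : J21 R i j = phiq R (Jq i j).
Proof.
rewrite /J21 mxE /Jq -val_eqE /=; case: (val i == val j) => //; last by rewrite phiq0.
by case: (val i == 2%N); rewrite phiqC ?rmorphN rmorph1 /real_complex_def; simpc.
Qed.

Lemma su21_closed (R : realType) (a : R) A B : su21 A -> su21 B -> su21 (a%:C *: A + B).
Proof.
move=> [hA tA] [hB tB]; split; last by rewrite mxtraceD mxtraceZ tA tB mulr0 addr0.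
rewrite conj_tr_lin mulmxDl mulmxDr -!scalemxAl -scalemxAr.
by rewrite addrACA -scalerDr hA hB scaler0 addr0.
Qed.

Lemma su21_0 (R : realType) : su21 (0 : 'M[R[i]]_3).
Proof. by split; rewrite ?conj_tr0 ?mul0mx ?mulmx0 ?addr0 // mxtrace0. Qed.

Definition su21_chk (D : cdata) : bool :=
  all8 (fun k => all3 (fun i => all3 (fun j =>
     fsum 3 (fun l => conjc (fget D k l i) * Jq l j) + fsum 3 (fun l => Jq i l * fget D k l j) == 0)))
  && all8 (fun k => fsum 3 (fun i => fget D k i i) == 0).

Lemma su21_fmap (R : realType) D (x : 'cV[R]_8) : su21_chk D -> su21 (fmap D x).
Proof.
move=> /andP [h1 h2]; apply: big_closed; [exact: su21_0 | exact: su21_closed |] => k; split.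
  apply/matrixP => i j; rewrite !mxE.
  under eq_bigr do rewrite J21E /conj_tr !mxE -phiq_conj -phiqM.
  under [X in _ + X]eq_bigr do rewrite J21E mxE -phiqM.
  rewrite (@fsumE _ 3 (fun l => phiq R (conjc (fget D k l i) * Jq l j))).
  rewrite (@fsumE _ 3 (fun l => phiq R (Jq i l * fget D k l j))).
  by rewrite -!phiq_fsum -phiqD (eqP (all3P (all3P (all8P h1 k) i) j)) phiq0.
by rewrite trace_phiq (eqP (all8P h2 k)) phiq0.
Qed.

Lemma su21_entry (R : realType) (A : 'M[R[i]]_3) : su21 A -> forall i j : 'I_3,
  conjc (A j i) * phiq R (Jq j j) + phiq R (Jq i i) * A i j = 0.
Proof.
case=> h _ i j.
have JE : J21 R = \matrix_(a, b) phiq R (Jq a b) by apply/matrixP => a b; rewrite J21E mxE.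
rewrite JE in h; have := congr1 (fun M : 'M[R[i]]_3 => M i j) h; rewrite !mxE => <-.
congr (_ + _).
  rewrite (bigD1 j) //= big1 ?addr0; first by rewrite /conj_tr !mxE.
  by move=> l ne; rewrite !mxE /Jq val_eqE (negbTE ne) phiq0 mulr0.
rewrite (bigD1 i) //= big1 ?addr0; first by rewrite !mxE.
by move=> l ne; rewrite !mxE /Jq val_eqE eq_sym (negbTE ne) phiq0 mul0r.
Qed.

Lemma rel_c (R : realType) (z w : R[i]) (s t : R) :
  conjc z * s%:C + t%:C * w = 0 ->
  s * complex.Re z + t * complex.Re w = 0 /\ - s * complex.Im z + t * complex.Im w = 0.
Proof.
case: z => a b; case: w => c d; rewrite /real_complex_def /conjc; simpc.
by case=> e1 e2; split => /=; [rewrite -e1 | rewrite -e2]; ring.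
Qed.

Lemma su21_rel (R : realType) (A : 'M[R[i]]_3) (hA : su21 A) (a b : nat) :
  (a < 3)%N -> (b < 3)%N ->
  let s := if b == 2%N then -1 else 1 in let t := if a == 2%N then -1 else 1 in
  s * complex.Re (A (inord b) (inord a)) + t * complex.Re (A (inord a) (inord b)) = 0 /\
  - s * complex.Im (A (inord b) (inord a)) + t * complex.Im (A (inord a) (inord b)) = 0.
Proof.
move=> ha hb s t; apply: rel_c.
have := su21_entry hA (inord a) (inord b); rewrite /Jq !inordK // !eqxx /s /t.
by case: (b == 2%N); case: (a == 2%N); rewrite !phiqC ?rmorphN ?rmorph1.
Qed.

Lemma su21_surj (R : realType) (A : 'M[R[i]]_3) : su21 A -> fmap D_su21 (cmapc A) = A.
Proof.
move=> hA.
have r := su21_rel hA.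
have [r00 r00'] := r 0%N 0%N isT isT.
have [r11 r11'] := r 1%N 1%N isT isT.
have [r22 r22'] := r 2%N 2%N isT isT.
have [r01 r01'] := r 0%N 1%N isT isT.
have [r02 r02'] := r 0%N 2%N isT isT.
have [r12 r12'] := r 1%N 2%N isT isT.
have [t1 t2] : complex.Re (A (inord 0) (inord 0)) + complex.Re (A (inord 1) (inord 1)) + complex.Re (A (inord 2) (inord 2)) = 0 /\
  complex.Im (A (inord 0) (inord 0)) + complex.Im (A (inord 1) (inord 1)) + complex.Im (A (inord 2) (inord 2)) = 0.
  case: hA => _; rewrite /mxtrace sum3E.
  by case: (A (inord 0) (inord 0)) => ? ?; case: (A (inord 1) (inord 1)) => ? ?;
     case: (A (inord 2) (inord 2)) => ? ? [].
move: r00 r00' r11 r11' r22 r22' r01 r01' r02 r02' r12 r12' => /=.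
move=> r00 r00' r11 r11' r22 r22' r01 r01' r02 r02' r12 r12'.
apply/matrixP => i j.
have [n hn ->] := ord3_inord i; have [m hm ->] := ord3_inord j.
rewrite fmap_entry //.
under eq_bigr do rewrite mxE.
rewrite (@fsumE _ 8 (fun k => (cm A k)%:C * phiq R (fget D_su21 k n m))).
rewrite [RHS]complex_ext.
case: n hn => [|[|[|//]]] _; case: m hm => [|[|[|//]]] _;
  rewrite /fsum /= /cm /= /cpart /phiq /= ?rmorph0 ?rmorph1 ?rmorphN ?rmorph_nat /real_complex_def;
  simpc; congr Complex; rewrite ?mulr0n ?mulr1n; lra.
Qed.

Lemma iso_su21 (R : realType) : iso_to_cmx (@su21 R) (sc_bracket (map (@liftq R) T_su21)).
Proof.
have hc : coord_chk D_su21 by vm_compute.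
exists (fmap D_su21); split; first exact: fmap_lin.
split; first by move=> x y e; rewrite -(cmap_fmap x hc) -(cmap_fmap y hc) e.
split; first by move=> x; apply: su21_fmap; vm_compute.
split; first by move=> A hA; exists (cmapc A); exact: su21_surj.
by apply: fmap_br; vm_compute.
Qed.

Local Close Scope complex_scope.

Definition rget (D : seq (seq rat)) (k i j : nat) : rat := nth 0 (nth [::] D k) (3 * i + j).
Definition Fr (R : realType) (D : seq (seq rat)) (k : nat) : 'M[R]_3 :=
  \matrix_(i < 3, j < 3) ratr (rget D k i j).
Definition fmapr (R : realType) (D : seq (seq rat)) (x : 'cV[R]_8) : 'M[R]_3 :=
  \sum_(k < 8) x k 0 *: Fr R D k.

Lemma ratr_fsum (R : realType) n (F : nat -> rat) :
  (ratr (fsum n F) : R) = fsum n (fun l => ratr (F l)).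
Proof. rewrite /fsum; elim: (iota 0 n) => [|a s IH] /=; first by rewrite rmorph0. by rewrite rmorphD; congr (_ + _); exact: IH. Qed.

Definition brk_chkr (D : seq (seq rat)) (T : qtab) : bool :=
  all8 (fun a => all8 (fun b => all3 (fun i => all3 (fun j =>
    fsum 3 (fun l => rget D a i l * rget D b l j) - fsum 3 (fun l => rget D b i l * rget D a l j)
    == fsum 8 (fun k => scq T a.+1 b.+1 k.+1 * rget D k i j))))).

Lemma brk_okr (R : realType) D T : brk_chkr D T -> forall a b : 'I_8,
  Fr R D a *m Fr R D b - Fr R D b *m Fr R D a =
  \sum_(k < 8) ratr (scq T a.+1 b.+1 k.+1) *: Fr R D k.
Proof.
move=> h a b; apply/matrixP => i j.
have := all3P (all3P (all8P (all8P h a) b) i) j => /eqP e.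
rewrite !mxE summxE.
under eq_bigr do rewrite !mxE.
under [X in _ - X = _]eq_bigr do rewrite !mxE.
under [RHS]eq_bigr do rewrite !mxE -rmorphM.
under eq_bigr do rewrite -rmorphM.
under [X in _ - X = _]eq_bigr do rewrite -rmorphM.
rewrite (@fsumE _ 3 (fun l => ratr (rget D a i l * rget D b l j))).
rewrite (@fsumE _ 3 (fun l => ratr (rget D b i l * rget D a l j))).
rewrite (@fsumE _ 8 (fun k => ratr (scq T a.+1 b.+1 k.+1 * rget D k i j))).
by rewrite -!ratr_fsum -rmorphB e.
Qed.

Lemma fmapr_lin (R : realType) D (a : R) x y :
  fmapr D (a *: x + y) = a *: fmapr D x + fmapr D y.
Proof.
rewrite /fmapr scaler_sumr -big_split; apply: eq_bigr => k _ /=.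
by rewrite !mxE scalerDl scalerA.
Qed.

Lemma fmapr_br (R : realType) D T : brk_chkr D T -> forall x y,
  fmapr D (sc_bracket (map (@liftq R) T) x y) = fmapr D x *m fmapr D y - fmapr D y *m fmapr D x.
Proof.
move=> h x y.
have E1 : fmapr D x *m fmapr D y =
   \sum_(a < 8) \sum_(b < 8) (x a 0 * y b 0) *: (Fr R D a *m Fr R D b).
  rewrite /fmapr mulmx_suml; apply: eq_bigr => a _; rewrite mulmx_sumr; apply: eq_bigr => b _.
  by rewrite -scalemxAl -scalemxAr scalerA.
have E2 : fmapr D y *m fmapr D x =
   \sum_(a < 8) \sum_(b < 8) (x a 0 * y b 0) *: (Fr R D b *m Fr R D a).
  rewrite /fmapr mulmx_suml exchange_big; apply: eq_bigr => a _.
  rewrite mulmx_sumr; apply: eq_bigr => b _.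
  by rewrite -scalemxAl -scalemxAr scalerA mulrC.
rewrite E1 E2 -sumrB.
under [RHS]eq_bigr do rewrite -sumrB.
under [RHS]eq_bigr do under eq_bigr do rewrite -scalerBr (brk_okr R h) scaler_sumr.
rewrite /fmapr /sc_bracket.
rewrite (eq_bigr (fun k : 'I_8 => (\sum_(a < 8) \sum_(b < 8) x a 0 * y b 0 * sc_coef (map (@liftq R) T) a.+1 b.+1 k.+1) *: Fr R D k)); last by move=> k _; rewrite mxE.
under eq_bigr do rewrite scaler_suml.
under eq_bigr do under eq_bigr do rewrite scaler_suml.
rewrite exchange_big; apply: eq_bigr => a _.
rewrite exchange_big; apply: eq_bigr => b _.
apply: eq_bigr => k _.
by rewrite scalerA scqE.
Qed.

Definition cidxr : seq (nat * nat) :=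
  [:: (0, 0); (1, 1); (0, 1); (0, 2); (1, 0); (1, 2); (2, 0); (2, 1)]%N.
Definition cmr (R : realType) (A : 'M[R]_3) (k : nat) : R :=
  let: (i, j) := nth (0, 0)%N cidxr k in A (inord i) (inord j).
Definition cmapr (R : realType) (A : 'M[R]_3) : 'cV[R]_8 := \col_(k < 8) cmr A k.

Definition coord_chkr (D : seq (seq rat)) : bool :=
  all8 (fun k' => all8 (fun k =>
    (let: (i, j) := nth (0, 0)%N cidxr k in rget D k' i j) == (k' == k)%:R)).

Definition sl3_chk (D : seq (seq rat)) : bool :=
  all8 (fun k => fsum 3 (fun i => rget D k i i) == 0).

Lemma fmapr_entry (R : realType) D (x : 'cV[R]_8) (i j : nat) : (i < 3)%N -> (j < 3)%N ->
  fmapr D x (inord i) (inord j) = \sum_(k < 8) x k 0 * ratr (rget D k i j).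
Proof.
move=> hi hj; rewrite /fmapr summxE; apply: eq_bigr => k _.
by rewrite !mxE !inordK.
Qed.

Lemma cidxr_ok k : (k < 8)%N -> let: (i, j) := nth (0, 0)%N cidxr k in (i < 3)%N && (j < 3)%N.
Proof. by do 8! (case: k => [|k] //). Qed.

Lemma cmapr_fmapr (R : realType) D (x : 'cV[R]_8) : coord_chkr D -> cmapr (fmapr D x) = x.
Proof.
move=> h; apply/matrixP => k j0; rewrite (ord1 j0) mxE /cmr.
have ok := cidxr_ok (ltn_ord k).
have hc : forall k' : 'I_8, (let: (i, j) := nth (0, 0)%N cidxr k in rget D k' i j) == (k' == k)%:R.
  by move=> k'; exact: (all8P (all8P h k') k).
move: ok hc; case: (nth (0, 0)%N cidxr k) => i j /andP [hi hj] hc.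
rewrite fmapr_entry //.
under eq_bigr do rewrite (eqP (hc _)).
rewrite (bigD1 k) //= big1 ?addr0; first by rewrite eqxx rmorph1 mulr1.
by move=> k' /negbTE ne; rewrite ne rmorph0 mulr0.
Qed.

Lemma sl3_fmapr (R : realType) D (x : 'cV[R]_8) : sl3_chk D -> sl3R (fmapr D x).
Proof.
move=> h; rewrite /sl3R /mxtrace /fmapr.
under eq_bigr do rewrite summxE.
rewrite exchange_big big1 // => k _.
under eq_bigr do rewrite !mxE.
rewrite -mulr_sumr (@fsumE _ 3 (fun i => ratr (rget D k i i))) -ratr_fsum (eqP (all8P h k)).
by rewrite rmorph0 mulr0.
Qed.

Lemma sum3Er (R : realType) (F : 'I_3 -> R) :
  \sum_(i < 3) F i = F (inord 0) + F (inord 1) + F (inord 2).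
Proof.
rewrite !big_ord_recr big_ord0 /= add0r.
by congr (F _ + F _ + F _); apply: val_inj; rewrite /= inordK.
Qed.


Lemma sl3_surj (R : realType) (A : 'M[R]_3) : sl3R A -> fmapr D_sl3R (cmapr A) = A.
Proof.
move=> hA.
have t : A (inord 0) (inord 0) + A (inord 1) (inord 1) + A (inord 2) (inord 2) = 0.
  by move: hA; rewrite /sl3R /mxtrace sum3Er.
apply/matrixP => i j.
have [n hn ->] := ord3_inord i; have [m hm ->] := ord3_inord j.
rewrite fmapr_entry //.
under eq_bigr do rewrite mxE.
rewrite (@fsumE _ 8 (fun k => cmr A k * ratr (rget D_sl3R k n m))).
case: n hn => [|[|[|//]]] _; case: m hm => [|[|[|//]]] _;
  rewrite /fsum /= /cmr /= ?rmorph0 ?rmorph1 ?rmorphN ?rmorph_nat ?mulr0n ?mulr1n; lra.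
Qed.

Lemma iso_sl3R (R : realType) : iso_to_rmx (@sl3R R) (sc_bracket (map (@liftq R) T_sl3R)).
Proof.
have hc : coord_chkr D_sl3R by vm_compute.
exists (fmapr D_sl3R); split; first exact: fmapr_lin.
split; first by move=> x y e; rewrite -(cmapr_fmapr x hc) -(cmapr_fmapr y hc) e.
split; first by move=> x; apply: sl3_fmapr; vm_compute.
split; first by move=> A hA; exists (cmapr A); exact: sl3_surj.
by apply: fmapr_br; vm_compute.
Qed.

Lemma iso_rmx_transfer (R : realType) g (b : bracket R) (Q Qi : 'M[R]_8) :
  Q *m Qi = 1%:M -> Qi *m Q = 1%:M -> iso_to_rmx g b ->
  iso_to_rmx g (fun x y => Qi *m b (Q *m x) (Q *m y)).
Proof.
move=> QQi QiQ [f [hl [hi [hg [hs hb]]]]].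
exists (fun x => f (Q *m x)); split.
  by move=> a x y; rewrite mulmxDr -scalemxAr hl.
split; first by move=> x y /hi e; rewrite -[x]mul1mx -[y]mul1mx -QiQ -!mulmxA e.
split; first by move=> x; exact: hg.
split; first by move=> A /hs [x <-]; exists (Qi *m x); rewrite mulmxA QQi mul1mx.
by move=> x y; rewrite mulmxA QQi mul1mx hb.
Qed.

Lemma claim_rmx (R : realType) g Ts Tt Q Qi P Pi w :
  iso_to_rmx g (sc_bracket (map (@liftq R) Ts)) -> chk Ts Tt Q Qi P Pi w ->
  exists b : bracket R, iso_to_rmx g b /\ contracts_onto b (sc_bracket (map (@liftq R) Tt)).
Proof.
move=> hiso hc; exists (fun x y => mq R Qi *m sc_bracket (map (@liftq R) Ts) (mq R Q *m x) (mq R Q *m y)).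
split; last exact: (@chk_contr R _ _ _ _ _ _ _ hc).
move: hc => /andP[_ /andP[_ /andP[h1 /andP[h2 _]]]].
by apply: iso_rmx_transfer => //; apply: inv8P.
Qed.


Definition scr (i j k : nat) (c : rat) : nat * nat * nat * rat := (i, j, k, c).
Local Notation hq := (2^-1 : rat).
Definition tabAq : qtab :=
  [:: scr 2 3 1 (1); scr 1 2 3 (1); scr 1 3 2 (-1); scr 1 4 7 (hq); scr 1 5 6 (hq); scr 1 6 5 (-hq);
      scr 1 7 4 (-hq); scr 2 4 5 (hq); scr 2 5 4 (-hq); scr 2 6 7 (hq); scr 2 7 6 (-hq); scr 3 4 6 (hq);
      scr 3 5 7 (-hq); scr 3 6 4 (-hq); scr 3 7 5 (hq)].
Definition tabBq : qtab :=
  [:: scr 1 2 2 (2); scr 1 3 3 (-2); scr 2 3 1 (1); scr 1 4 4 (1); scr 1 5 5 (-1); scr 2 5 4 (1);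
      scr 3 4 5 (1); scr 1 6 6 (1); scr 1 7 7 (-1); scr 2 7 6 (1); scr 3 6 7 (1)].
Definition L8_2q : qtab := tabAq ++ [:: scr 4 5 8 (1); scr 6 7 8 (-1)].
Definition L8_4_0q : qtab := tabAq ++ [:: scr 4 8 6 (-1); scr 5 8 7 (-1); scr 6 8 4 (1); scr 7 8 5 (1)].
Definition L8_5q : qtab :=
    [:: scr 2 3 1 (1); scr 1 2 3 (1); scr 1 3 2 (-1); scr 1 4 7 (hq); scr 1 5 6 (-hq); scr 1 6 5 (2);
        scr 1 6 8 (-1); scr 1 7 4 (-2); scr 1 8 6 (3); scr 2 4 6 (hq); scr 2 5 7 (hq); scr 2 6 4 (-2);
        scr 2 7 5 (-2); scr 2 7 8 (-1); scr 2 8 7 (3); scr 3 4 5 (2); scr 3 5 4 (-2); scr 3 6 7 (1);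
        scr 3 7 6 (-1)].
Definition L8_13q (eps : rat) : qtab := tabBq ++ [:: scr 4 5 8 (1); scr 6 7 8 (eps)].
Definition L8_14q : qtab := tabBq ++ [:: scr 6 8 4 (1); scr 7 8 5 (1)].
Definition L8_15q : qtab := tabBq ++ [:: scr 6 7 8 (1); scr 6 8 4 (1); scr 7 8 5 (1)].
Definition L8_17_m1q : qtab := tabBq ++ [:: scr 4 8 4 (1); scr 5 8 5 (1); scr 6 8 6 (-1); scr 7 8 7 (-1)].
Definition L8_18_0q : qtab := tabBq ++ [:: scr 4 8 6 (-1); scr 5 8 7 (-1); scr 6 8 4 (1); scr 7 8 5 (1)].
Definition L8_21q : qtab :=
    [:: scr 1 2 2 (2); scr 1 3 3 (-2); scr 2 3 1 (1); scr 1 4 4 (4); scr 1 5 5 (2); scr 1 7 7 (-2);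
        scr 1 8 8 (-4); scr 2 5 4 (4); scr 2 6 5 (3); scr 2 7 6 (2); scr 2 8 7 (1); scr 3 4 5 (1);
        scr 3 5 6 (2); scr 3 6 7 (3); scr 3 7 8 (4)].


Lemma L8_2E (R : realType) : @L8_2 R = sc_bracket (map (@liftq R) L8_2q).
Proof.
rewrite /L8_2 /=; congr sc_bracket; rewrite /liftq /sc /=.
by rewrite ?rmorphN ?fmorphV ?rmorph1 ?rmorph_nat.
Qed.

Lemma L8_4_0E (R : realType) : @L8_4_0 R = sc_bracket (map (@liftq R) L8_4_0q).
Proof.
rewrite /L8_4_0 /=; congr sc_bracket; rewrite /liftq /sc /=.
by rewrite ?rmorphN ?fmorphV ?rmorph1 ?rmorph_nat.
Qed.

Lemma L8_5E (R : realType) : @L8_5 R = sc_bracket (map (@liftq R) L8_5q).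
Proof.
rewrite /L8_5 /=; congr sc_bracket; rewrite /liftq /sc /=.
by rewrite ?rmorphN ?fmorphV ?rmorph1 ?rmorph_nat.
Qed.

Lemma L8_14E (R : realType) : @L8_14 R = sc_bracket (map (@liftq R) L8_14q).
Proof.
rewrite /L8_14 /=; congr sc_bracket; rewrite /liftq /sc /=.
by rewrite ?rmorphN ?fmorphV ?rmorph1 ?rmorph_nat.
Qed.

Lemma L8_15E (R : realType) : @L8_15 R = sc_bracket (map (@liftq R) L8_15q).
Proof.
rewrite /L8_15 /=; congr sc_bracket; rewrite /liftq /sc /=.
by rewrite ?rmorphN ?fmorphV ?rmorph1 ?rmorph_nat.
Qed.

Lemma L8_17_m1E (R : realType) : @L8_17_m1 R = sc_bracket (map (@liftq R) L8_17_m1q).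
Proof.
rewrite /L8_17_m1 /=; congr sc_bracket; rewrite /liftq /sc /=.
by rewrite ?rmorphN ?fmorphV ?rmorph1 ?rmorph_nat.
Qed.

Lemma L8_18_0E (R : realType) : @L8_18_0 R = sc_bracket (map (@liftq R) L8_18_0q).
Proof.
rewrite /L8_18_0 /=; congr sc_bracket; rewrite /liftq /sc /=.
by rewrite ?rmorphN ?fmorphV ?rmorph1 ?rmorph_nat.
Qed.

Lemma L8_21E (R : realType) : @L8_21 R = sc_bracket (map (@liftq R) L8_21q).
Proof.
rewrite /L8_21 /=; congr sc_bracket; rewrite /liftq /sc /=.
by rewrite ?rmorphN ?fmorphV ?rmorph1 ?rmorph_nat.
Qed.

Lemma L8_13pE (R : realType) : @L8_13 R 1 = sc_bracket (map (@liftq R) (L8_13q 1)).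
Proof.
rewrite /L8_13 /=; congr sc_bracket; rewrite /liftq /sc /=.
by rewrite ?rmorphN ?fmorphV ?rmorph1 ?rmorph_nat.
Qed.

Lemma L8_13mE (R : realType) : @L8_13 R (-1) = sc_bracket (map (@liftq R) (L8_13q (-1))).
Proof.
rewrite /L8_13 /=; congr sc_bracket; rewrite /liftq /sc /=.
by rewrite ?rmorphN ?fmorphV ?rmorph1 ?rmorph_nat.
Qed.

Definition Q_su3_L2 : seq (seq rat) :=
  [:: [:: (0%:R); (0%:R); (-(1%:R / 2%:R)); (0%:R); (0%:R); (0%:R); (0%:R); ((1%:R / 3%:R))];
   [:: (0%:R); (0%:R); ((1%:R / 2%:R)); (0%:R); (0%:R); (0%:R); (0%:R); ((1%:R / 3%:R))];
   [:: (0%:R); (-(1%:R / 2%:R)); (0%:R); (0%:R); (0%:R); (0%:R); (0%:R); (0%:R)];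
   [:: (-(1%:R / 2%:R)); (0%:R); (0%:R); (0%:R); (0%:R); (0%:R); (0%:R); (0%:R)];
   [:: (0%:R); (0%:R); (0%:R); (1%:R); (0%:R); (0%:R); (0%:R); (0%:R)];
   [:: (0%:R); (0%:R); (0%:R); (0%:R); (1%:R); (0%:R); (0%:R); (0%:R)];
   [:: (0%:R); (0%:R); (0%:R); (0%:R); (0%:R); (1%:R); (0%:R); (0%:R)];
   [:: (0%:R); (0%:R); (0%:R); (0%:R); (0%:R); (0%:R); (1%:R); (0%:R)]].
Definition Qi_su3_L2 : seq (seq rat) :=
  [:: [:: (0%:R); (0%:R); (0%:R); (-2%:R); (0%:R); (0%:R); (0%:R); (0%:R)];
   [:: (0%:R); (0%:R); (-2%:R); (0%:R); (0%:R); (0%:R); (0%:R); (0%:R)];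
   [:: (-1%:R); (1%:R); (0%:R); (0%:R); (0%:R); (0%:R); (0%:R); (0%:R)];
   [:: (0%:R); (0%:R); (0%:R); (0%:R); (1%:R); (0%:R); (0%:R); (0%:R)];
   [:: (0%:R); (0%:R); (0%:R); (0%:R); (0%:R); (1%:R); (0%:R); (0%:R)];
   [:: (0%:R); (0%:R); (0%:R); (0%:R); (0%:R); (0%:R); (1%:R); (0%:R)];
   [:: (0%:R); (0%:R); (0%:R); (0%:R); (0%:R); (0%:R); (0%:R); (1%:R)];
   [:: ((3%:R / 2%:R)); ((3%:R / 2%:R)); (0%:R); (0%:R); (0%:R); (0%:R); (0%:R); (0%:R)]].
Definition P_su3_L2 : seq (seq rat) :=
  [:: [:: (1%:R); (0%:R); (0%:R); (0%:R); (0%:R); (0%:R); (0%:R); (0%:R)];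
   [:: (0%:R); (1%:R); (0%:R); (0%:R); (0%:R); (0%:R); (0%:R); (0%:R)];
   [:: (0%:R); (0%:R); (1%:R); (0%:R); (0%:R); (0%:R); (0%:R); (0%:R)];
   [:: (0%:R); (0%:R); (0%:R); (0%:R); (3%:R); (-3%:R); (0%:R); (0%:R)];
   [:: (0%:R); (0%:R); (0%:R); (3%:R); (0%:R); (0%:R); (3%:R); (0%:R)];
   [:: (0%:R); (0%:R); (0%:R); (3%:R); (0%:R); (0%:R); (-3%:R); (0%:R)];
   [:: (0%:R); (0%:R); (0%:R); (0%:R); (3%:R); (3%:R); (0%:R); (0%:R)];
   [:: (0%:R); (0%:R); (0%:R); (0%:R); (0%:R); (0%:R); (0%:R); (-6%:R)]].
Definition Pi_su3_L2 : seq (seq rat) :=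
  [:: [:: (1%:R); (0%:R); (0%:R); (0%:R); (0%:R); (0%:R); (0%:R); (0%:R)];
   [:: (0%:R); (1%:R); (0%:R); (0%:R); (0%:R); (0%:R); (0%:R); (0%:R)];
   [:: (0%:R); (0%:R); (1%:R); (0%:R); (0%:R); (0%:R); (0%:R); (0%:R)];
   [:: (0%:R); (0%:R); (0%:R); (0%:R); ((1%:R / 6%:R)); ((1%:R / 6%:R)); (0%:R); (0%:R)];
   [:: (0%:R); (0%:R); (0%:R); ((1%:R / 6%:R)); (0%:R); (0%:R); ((1%:R / 6%:R)); (0%:R)];
   [:: (0%:R); (0%:R); (0%:R); (-(1%:R / 6%:R)); (0%:R); (0%:R); ((1%:R / 6%:R)); (0%:R)];
   [:: (0%:R); (0%:R); (0%:R); (0%:R); ((1%:R / 6%:R)); (-(1%:R / 6%:R)); (0%:R); (0%:R)];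
   [:: (0%:R); (0%:R); (0%:R); (0%:R); (0%:R); (0%:R); (0%:R); (-(1%:R / 6%:R))]].
Definition w_su3_L2 : seq nat := [:: 0; 0; 0; 1; 1; 1; 1; 2].


Lemma c_su3_L2 (R : realType) : su3_contracts_onto (@L8_2 R).
Proof.
rewrite L8_2E; apply: (claim_cmx (Q := Q_su3_L2) (Qi := Qi_su3_L2) (P := P_su3_L2) (Pi := Pi_su3_L2) (w := w_su3_L2)).
  exact: iso_su3.
by vm_compute.
Qed.

Definition Q_su3_L4 : seq (seq rat) :=
  [:: [:: (0%:R); (0%:R); (-(1%:R / 2%:R)); (0%:R); (0%:R); (0%:R); (0%:R); ((1%:R / 3%:R))];
   [:: (0%:R); (0%:R); ((1%:R / 2%:R)); (0%:R); (0%:R); (0%:R); (0%:R); ((1%:R / 3%:R))];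
   [:: (0%:R); (-(1%:R / 2%:R)); (0%:R); (0%:R); (0%:R); (0%:R); (0%:R); (0%:R)];
   [:: (-(1%:R / 2%:R)); (0%:R); (0%:R); (0%:R); (0%:R); (0%:R); (0%:R); (0%:R)];
   [:: (0%:R); (0%:R); (0%:R); (1%:R); (0%:R); (0%:R); (0%:R); (0%:R)];
   [:: (0%:R); (0%:R); (0%:R); (0%:R); (1%:R); (0%:R); (0%:R); (0%:R)];
   [:: (0%:R); (0%:R); (0%:R); (0%:R); (0%:R); (1%:R); (0%:R); (0%:R)];
   [:: (0%:R); (0%:R); (0%:R); (0%:R); (0%:R); (0%:R); (1%:R); (0%:R)]].
Definition Qi_su3_L4 : seq (seq rat) :=
  [:: [:: (0%:R); (0%:R); (0%:R); (-2%:R); (0%:R); (0%:R); (0%:R); (0%:R)];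
   [:: (0%:R); (0%:R); (-2%:R); (0%:R); (0%:R); (0%:R); (0%:R); (0%:R)];
   [:: (-1%:R); (1%:R); (0%:R); (0%:R); (0%:R); (0%:R); (0%:R); (0%:R)];
   [:: (0%:R); (0%:R); (0%:R); (0%:R); (1%:R); (0%:R); (0%:R); (0%:R)];
   [:: (0%:R); (0%:R); (0%:R); (0%:R); (0%:R); (1%:R); (0%:R); (0%:R)];
   [:: (0%:R); (0%:R); (0%:R); (0%:R); (0%:R); (0%:R); (1%:R); (0%:R)];
   [:: (0%:R); (0%:R); (0%:R); (0%:R); (0%:R); (0%:R); (0%:R); (1%:R)];
   [:: ((3%:R / 2%:R)); ((3%:R / 2%:R)); (0%:R); (0%:R); (0%:R); (0%:R); (0%:R); (0%:R)]].
Definition P_su3_L4 : seq (seq rat) :=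
  [:: [:: (1%:R); (0%:R); (0%:R); (0%:R); (0%:R); (0%:R); (0%:R); (0%:R)];
   [:: (0%:R); (1%:R); (0%:R); (0%:R); (0%:R); (0%:R); (0%:R); (0%:R)];
   [:: (0%:R); (0%:R); (1%:R); (0%:R); (0%:R); (0%:R); (0%:R); (0%:R)];
   [:: (0%:R); (0%:R); (0%:R); (-1%:R); (0%:R); (0%:R); (0%:R); (0%:R)];
   [:: (0%:R); (0%:R); (0%:R); (0%:R); (0%:R); (-1%:R); (0%:R); (0%:R)];
   [:: (0%:R); (0%:R); (0%:R); (0%:R); (1%:R); (0%:R); (0%:R); (0%:R)];
   [:: (0%:R); (0%:R); (0%:R); (0%:R); (0%:R); (0%:R); (1%:R); (0%:R)];
   [:: (0%:R); (0%:R); (0%:R); (0%:R); (0%:R); (0%:R); (0%:R); (-1%:R)]].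
Definition Pi_su3_L4 : seq (seq rat) :=
  [:: [:: (1%:R); (0%:R); (0%:R); (0%:R); (0%:R); (0%:R); (0%:R); (0%:R)];
   [:: (0%:R); (1%:R); (0%:R); (0%:R); (0%:R); (0%:R); (0%:R); (0%:R)];
   [:: (0%:R); (0%:R); (1%:R); (0%:R); (0%:R); (0%:R); (0%:R); (0%:R)];
   [:: (0%:R); (0%:R); (0%:R); (-1%:R); (0%:R); (0%:R); (0%:R); (0%:R)];
   [:: (0%:R); (0%:R); (0%:R); (0%:R); (0%:R); (1%:R); (0%:R); (0%:R)];
   [:: (0%:R); (0%:R); (0%:R); (0%:R); (-1%:R); (0%:R); (0%:R); (0%:R)];
   [:: (0%:R); (0%:R); (0%:R); (0%:R); (0%:R); (0%:R); (1%:R); (0%:R)];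
   [:: (0%:R); (0%:R); (0%:R); (0%:R); (0%:R); (0%:R); (0%:R); (-1%:R)]].
Definition w_su3_L4 : seq nat := [:: 0; 0; 0; 1; 1; 1; 1; 0].


Lemma c_su3_L4 (R : realType) : su3_contracts_onto (@L8_4_0 R).
Proof.
rewrite L8_4_0E; apply: (claim_cmx (Q := Q_su3_L4) (Qi := Qi_su3_L4) (P := P_su3_L4) (Pi := Pi_su3_L4) (w := w_su3_L4)).
  exact: iso_su3.
by vm_compute.
Qed.

Definition Q_su3_L5 : seq (seq rat) :=
  [:: [:: (0%:R); (0%:R); (0%:R); (1%:R); (0%:R); (0%:R); (0%:R); (0%:R)];
   [:: (0%:R); (0%:R); (0%:R); (-1%:R); (1%:R); (0%:R); (0%:R); (0%:R)];
   [:: (0%:R); (0%:R); (-1%:R); (0%:R); (0%:R); (0%:R); (0%:R); (0%:R)];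
   [:: (0%:R); (0%:R); (0%:R); (0%:R); (0%:R); (1%:R); (0%:R); (0%:R)];
   [:: (0%:R); (1%:R); (0%:R); (0%:R); (0%:R); (0%:R); (0%:R); (0%:R)];
   [:: (0%:R); (0%:R); (0%:R); (0%:R); (0%:R); (0%:R); (1%:R); (0%:R)];
   [:: (-1%:R); (0%:R); (0%:R); (0%:R); (0%:R); (0%:R); (0%:R); (0%:R)];
   [:: (0%:R); (0%:R); (0%:R); (0%:R); (0%:R); (0%:R); (0%:R); (1%:R)]].
Definition Qi_su3_L5 : seq (seq rat) :=
  [:: [:: (0%:R); (0%:R); (0%:R); (0%:R); (0%:R); (0%:R); (-1%:R); (0%:R)];
   [:: (0%:R); (0%:R); (0%:R); (0%:R); (1%:R); (0%:R); (0%:R); (0%:R)];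
   [:: (0%:R); (0%:R); (-1%:R); (0%:R); (0%:R); (0%:R); (0%:R); (0%:R)];
   [:: (1%:R); (0%:R); (0%:R); (0%:R); (0%:R); (0%:R); (0%:R); (0%:R)];
   [:: (1%:R); (1%:R); (0%:R); (0%:R); (0%:R); (0%:R); (0%:R); (0%:R)];
   [:: (0%:R); (0%:R); (0%:R); (1%:R); (0%:R); (0%:R); (0%:R); (0%:R)];
   [:: (0%:R); (0%:R); (0%:R); (0%:R); (0%:R); (1%:R); (0%:R); (0%:R)];
   [:: (0%:R); (0%:R); (0%:R); (0%:R); (0%:R); (0%:R); (0%:R); (1%:R)]].
Definition P_su3_L5 : seq (seq rat) :=
  [:: [:: (1%:R); (0%:R); (0%:R); (0%:R); (0%:R); (0%:R); (0%:R); (0%:R)];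
   [:: (0%:R); (1%:R); (0%:R); (0%:R); (0%:R); (0%:R); (0%:R); (0%:R)];
   [:: (0%:R); (0%:R); (1%:R); (0%:R); (0%:R); (0%:R); (0%:R); (0%:R)];
   [:: (0%:R); (0%:R); (0%:R); (0%:R); (0%:R); (-4%:R); (0%:R); (0%:R)];
   [:: (0%:R); (0%:R); (0%:R); (4%:R); (-2%:R); (0%:R); (0%:R); (0%:R)];
   [:: (0%:R); (0%:R); (0%:R); (0%:R); (0%:R); (0%:R); (0%:R); (2%:R)];
   [:: (0%:R); (0%:R); (0%:R); (0%:R); (0%:R); (0%:R); (-2%:R); (0%:R)];
   [:: (0%:R); (0%:R); (0%:R); (0%:R); (1%:R); (0%:R); (0%:R); (0%:R)]].
Definition Pi_su3_L5 : seq (seq rat) :=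
  [:: [:: (1%:R); (0%:R); (0%:R); (0%:R); (0%:R); (0%:R); (0%:R); (0%:R)];
   [:: (0%:R); (1%:R); (0%:R); (0%:R); (0%:R); (0%:R); (0%:R); (0%:R)];
   [:: (0%:R); (0%:R); (1%:R); (0%:R); (0%:R); (0%:R); (0%:R); (0%:R)];
   [:: (0%:R); (0%:R); (0%:R); (0%:R); ((1%:R / 4%:R)); (0%:R); (0%:R); ((1%:R / 2%:R))];
   [:: (0%:R); (0%:R); (0%:R); (0%:R); (0%:R); (0%:R); (0%:R); (1%:R)];
   [:: (0%:R); (0%:R); (0%:R); (-(1%:R / 4%:R)); (0%:R); (0%:R); (0%:R); (0%:R)];
   [:: (0%:R); (0%:R); (0%:R); (0%:R); (0%:R); (0%:R); (-(1%:R / 2%:R)); (0%:R)];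
   [:: (0%:R); (0%:R); (0%:R); (0%:R); (0%:R); ((1%:R / 2%:R)); (0%:R); (0%:R)]].
Definition w_su3_L5 : seq nat := [:: 0; 0; 0; 1; 1; 1; 1; 1].


Lemma c_su3_L5 (R : realType) : su3_contracts_onto (@L8_5 R).
Proof.
rewrite L8_5E; apply: (claim_cmx (Q := Q_su3_L5) (Qi := Qi_su3_L5) (P := P_su3_L5) (Pi := Pi_su3_L5) (w := w_su3_L5)).
  exact: iso_su3.
by vm_compute.
Qed.

Definition Q_su21_L2 : seq (seq rat) :=
  [:: [:: (0%:R); (0%:R); (-(1%:R / 2%:R)); (0%:R); (0%:R); (0%:R); (0%:R); ((1%:R / 3%:R))];
   [:: (0%:R); (0%:R); ((1%:R / 2%:R)); (0%:R); (0%:R); (0%:R); (0%:R); ((1%:R / 3%:R))];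
   [:: (0%:R); (-(1%:R / 2%:R)); (0%:R); (0%:R); (0%:R); (0%:R); (0%:R); (0%:R)];
   [:: (-(1%:R / 2%:R)); (0%:R); (0%:R); (0%:R); (0%:R); (0%:R); (0%:R); (0%:R)];
   [:: (0%:R); (0%:R); (0%:R); (1%:R); (0%:R); (0%:R); (0%:R); (0%:R)];
   [:: (0%:R); (0%:R); (0%:R); (0%:R); (1%:R); (0%:R); (0%:R); (0%:R)];
   [:: (0%:R); (0%:R); (0%:R); (0%:R); (0%:R); (1%:R); (0%:R); (0%:R)];
   [:: (0%:R); (0%:R); (0%:R); (0%:R); (0%:R); (0%:R); (1%:R); (0%:R)]].
Definition Qi_su21_L2 : seq (seq rat) :=
  [:: [:: (0%:R); (0%:R); (0%:R); (-2%:R); (0%:R); (0%:R); (0%:R); (0%:R)];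
   [:: (0%:R); (0%:R); (-2%:R); (0%:R); (0%:R); (0%:R); (0%:R); (0%:R)];
   [:: (-1%:R); (1%:R); (0%:R); (0%:R); (0%:R); (0%:R); (0%:R); (0%:R)];
   [:: (0%:R); (0%:R); (0%:R); (0%:R); (1%:R); (0%:R); (0%:R); (0%:R)];
   [:: (0%:R); (0%:R); (0%:R); (0%:R); (0%:R); (1%:R); (0%:R); (0%:R)];
   [:: (0%:R); (0%:R); (0%:R); (0%:R); (0%:R); (0%:R); (1%:R); (0%:R)];
   [:: (0%:R); (0%:R); (0%:R); (0%:R); (0%:R); (0%:R); (0%:R); (1%:R)];
   [:: ((3%:R / 2%:R)); ((3%:R / 2%:R)); (0%:R); (0%:R); (0%:R); (0%:R); (0%:R); (0%:R)]].
Definition P_su21_L2 : seq (seq rat) :=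
  [:: [:: (1%:R); (0%:R); (0%:R); (0%:R); (0%:R); (0%:R); (0%:R); (0%:R)];
   [:: (0%:R); (1%:R); (0%:R); (0%:R); (0%:R); (0%:R); (0%:R); (0%:R)];
   [:: (0%:R); (0%:R); (1%:R); (0%:R); (0%:R); (0%:R); (0%:R); (0%:R)];
   [:: (0%:R); (0%:R); (0%:R); (0%:R); (3%:R); (-3%:R); (0%:R); (0%:R)];
   [:: (0%:R); (0%:R); (0%:R); (3%:R); (0%:R); (0%:R); (3%:R); (0%:R)];
   [:: (0%:R); (0%:R); (0%:R); (3%:R); (0%:R); (0%:R); (-3%:R); (0%:R)];
   [:: (0%:R); (0%:R); (0%:R); (0%:R); (3%:R); (3%:R); (0%:R); (0%:R)];
   [:: (0%:R); (0%:R); (0%:R); (0%:R); (0%:R); (0%:R); (0%:R); (6%:R)]].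
Definition Pi_su21_L2 : seq (seq rat) :=
  [:: [:: (1%:R); (0%:R); (0%:R); (0%:R); (0%:R); (0%:R); (0%:R); (0%:R)];
   [:: (0%:R); (1%:R); (0%:R); (0%:R); (0%:R); (0%:R); (0%:R); (0%:R)];
   [:: (0%:R); (0%:R); (1%:R); (0%:R); (0%:R); (0%:R); (0%:R); (0%:R)];
   [:: (0%:R); (0%:R); (0%:R); (0%:R); ((1%:R / 6%:R)); ((1%:R / 6%:R)); (0%:R); (0%:R)];
   [:: (0%:R); (0%:R); (0%:R); ((1%:R / 6%:R)); (0%:R); (0%:R); ((1%:R / 6%:R)); (0%:R)];
   [:: (0%:R); (0%:R); (0%:R); (-(1%:R / 6%:R)); (0%:R); (0%:R); ((1%:R / 6%:R)); (0%:R)];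
   [:: (0%:R); (0%:R); (0%:R); (0%:R); ((1%:R / 6%:R)); (-(1%:R / 6%:R)); (0%:R); (0%:R)];
   [:: (0%:R); (0%:R); (0%:R); (0%:R); (0%:R); (0%:R); (0%:R); ((1%:R / 6%:R))]].
Definition w_su21_L2 : seq nat := [:: 0; 0; 0; 1; 1; 1; 1; 2].


Lemma c_su21_L2 (R : realType) : su21_contracts_onto (@L8_2 R).
Proof.
rewrite L8_2E; apply: (claim_cmx (Q := Q_su21_L2) (Qi := Qi_su21_L2) (P := P_su21_L2) (Pi := Pi_su21_L2) (w := w_su21_L2)).
  exact: iso_su21.
by vm_compute.
Qed.

Definition Q_su21_L4 : seq (seq rat) :=
  [:: [:: (0%:R); (0%:R); (-(1%:R / 2%:R)); (0%:R); (0%:R); (0%:R); (0%:R); ((1%:R / 3%:R))];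
   [:: (0%:R); (0%:R); ((1%:R / 2%:R)); (0%:R); (0%:R); (0%:R); (0%:R); ((1%:R / 3%:R))];
   [:: (0%:R); (-(1%:R / 2%:R)); (0%:R); (0%:R); (0%:R); (0%:R); (0%:R); (0%:R)];
   [:: (-(1%:R / 2%:R)); (0%:R); (0%:R); (0%:R); (0%:R); (0%:R); (0%:R); (0%:R)];
   [:: (0%:R); (0%:R); (0%:R); (1%:R); (0%:R); (0%:R); (0%:R); (0%:R)];
   [:: (0%:R); (0%:R); (0%:R); (0%:R); (1%:R); (0%:R); (0%:R); (0%:R)];
   [:: (0%:R); (0%:R); (0%:R); (0%:R); (0%:R); (1%:R); (0%:R); (0%:R)];
   [:: (0%:R); (0%:R); (0%:R); (0%:R); (0%:R); (0%:R); (1%:R); (0%:R)]].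
Definition Qi_su21_L4 : seq (seq rat) :=
  [:: [:: (0%:R); (0%:R); (0%:R); (-2%:R); (0%:R); (0%:R); (0%:R); (0%:R)];
   [:: (0%:R); (0%:R); (-2%:R); (0%:R); (0%:R); (0%:R); (0%:R); (0%:R)];
   [:: (-1%:R); (1%:R); (0%:R); (0%:R); (0%:R); (0%:R); (0%:R); (0%:R)];
   [:: (0%:R); (0%:R); (0%:R); (0%:R); (1%:R); (0%:R); (0%:R); (0%:R)];
   [:: (0%:R); (0%:R); (0%:R); (0%:R); (0%:R); (1%:R); (0%:R); (0%:R)];
   [:: (0%:R); (0%:R); (0%:R); (0%:R); (0%:R); (0%:R); (1%:R); (0%:R)];
   [:: (0%:R); (0%:R); (0%:R); (0%:R); (0%:R); (0%:R); (0%:R); (1%:R)];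
   [:: ((3%:R / 2%:R)); ((3%:R / 2%:R)); (0%:R); (0%:R); (0%:R); (0%:R); (0%:R); (0%:R)]].
Definition P_su21_L4 : seq (seq rat) :=
  [:: [:: (1%:R); (0%:R); (0%:R); (0%:R); (0%:R); (0%:R); (0%:R); (0%:R)];
   [:: (0%:R); (1%:R); (0%:R); (0%:R); (0%:R); (0%:R); (0%:R); (0%:R)];
   [:: (0%:R); (0%:R); (1%:R); (0%:R); (0%:R); (0%:R); (0%:R); (0%:R)];
   [:: (0%:R); (0%:R); (0%:R); (-1%:R); (0%:R); (0%:R); (0%:R); (0%:R)];
   [:: (0%:R); (0%:R); (0%:R); (0%:R); (0%:R); (-1%:R); (0%:R); (0%:R)];
   [:: (0%:R); (0%:R); (0%:R); (0%:R); (1%:R); (0%:R); (0%:R); (0%:R)];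
   [:: (0%:R); (0%:R); (0%:R); (0%:R); (0%:R); (0%:R); (1%:R); (0%:R)];
   [:: (0%:R); (0%:R); (0%:R); (0%:R); (0%:R); (0%:R); (0%:R); (-1%:R)]].
Definition Pi_su21_L4 : seq (seq rat) :=
  [:: [:: (1%:R); (0%:R); (0%:R); (0%:R); (0%:R); (0%:R); (0%:R); (0%:R)];
   [:: (0%:R); (1%:R); (0%:R); (0%:R); (0%:R); (0%:R); (0%:R); (0%:R)];
   [:: (0%:R); (0%:R); (1%:R); (0%:R); (0%:R); (0%:R); (0%:R); (0%:R)];
   [:: (0%:R); (0%:R); (0%:R); (-1%:R); (0%:R); (0%:R); (0%:R); (0%:R)];
   [:: (0%:R); (0%:R); (0%:R); (0%:R); (0%:R); (1%:R); (0%:R); (0%:R)];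
   [:: (0%:R); (0%:R); (0%:R); (0%:R); (-1%:R); (0%:R); (0%:R); (0%:R)];
   [:: (0%:R); (0%:R); (0%:R); (0%:R); (0%:R); (0%:R); (1%:R); (0%:R)];
   [:: (0%:R); (0%:R); (0%:R); (0%:R); (0%:R); (0%:R); (0%:R); (-1%:R)]].
Definition w_su21_L4 : seq nat := [:: 0; 0; 0; 1; 1; 1; 1; 0].


Lemma c_su21_L4 (R : realType) : su21_contracts_onto (@L8_4_0 R).
Proof.
rewrite L8_4_0E; apply: (claim_cmx (Q := Q_su21_L4) (Qi := Qi_su21_L4) (P := P_su21_L4) (Pi := Pi_su21_L4) (w := w_su21_L4)).
  exact: iso_su21.
by vm_compute.
Qed.

Definition Q_su21_L13p : seq (seq rat) :=
  [:: [:: (0%:R); ((1%:R / 2%:R)); (-(1%:R / 2%:R)); (0%:R); (0%:R); (0%:R); (0%:R); (1%:R)];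
   [:: (0%:R); (0%:R); (0%:R); (0%:R); (0%:R); (0%:R); (0%:R); (-2%:R)];
   [:: (0%:R); (0%:R); (0%:R); (1%:R); (0%:R); (0%:R); (0%:R); (0%:R)];
   [:: (0%:R); (0%:R); (0%:R); (0%:R); (1%:R); (0%:R); (0%:R); (0%:R)];
   [:: (1%:R); (0%:R); (0%:R); (0%:R); (0%:R); (0%:R); (0%:R); (0%:R)];
   [:: (0%:R); (-(1%:R / 2%:R)); (-(1%:R / 2%:R)); (0%:R); (0%:R); (0%:R); (0%:R); (0%:R)];
   [:: (0%:R); (0%:R); (0%:R); (0%:R); (0%:R); (1%:R); (0%:R); (0%:R)];
   [:: (0%:R); (0%:R); (0%:R); (0%:R); (0%:R); (0%:R); (1%:R); (0%:R)]].
Definition Qi_su21_L13p : seq (seq rat) :=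
  [:: [:: (0%:R); (0%:R); (0%:R); (0%:R); (1%:R); (0%:R); (0%:R); (0%:R)];
   [:: (1%:R); ((1%:R / 2%:R)); (0%:R); (0%:R); (0%:R); (-1%:R); (0%:R); (0%:R)];
   [:: (-1%:R); (-(1%:R / 2%:R)); (0%:R); (0%:R); (0%:R); (-1%:R); (0%:R); (0%:R)];
   [:: (0%:R); (0%:R); (1%:R); (0%:R); (0%:R); (0%:R); (0%:R); (0%:R)];
   [:: (0%:R); (0%:R); (0%:R); (1%:R); (0%:R); (0%:R); (0%:R); (0%:R)];
   [:: (0%:R); (0%:R); (0%:R); (0%:R); (0%:R); (0%:R); (1%:R); (0%:R)];
   [:: (0%:R); (0%:R); (0%:R); (0%:R); (0%:R); (0%:R); (0%:R); (1%:R)];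
   [:: (0%:R); (-(1%:R / 2%:R)); (0%:R); (0%:R); (0%:R); (0%:R); (0%:R); (0%:R)]].
Definition P_su21_L13p : seq (seq rat) :=
  [:: [:: (1%:R); (0%:R); (0%:R); (0%:R); (0%:R); (0%:R); (0%:R); (0%:R)];
   [:: (0%:R); (1%:R); (0%:R); (0%:R); (0%:R); (0%:R); (0%:R); (0%:R)];
   [:: (0%:R); (0%:R); (1%:R); (0%:R); (0%:R); (0%:R); (0%:R); (0%:R)];
   [:: (0%:R); (0%:R); (0%:R); (-1%:R); (0%:R); (-1%:R); (0%:R); (0%:R)];
   [:: (0%:R); (0%:R); (0%:R); (0%:R); (1%:R); (0%:R); (1%:R); (0%:R)];
   [:: (0%:R); (0%:R); (0%:R); (0%:R); (-1%:R); (0%:R); (1%:R); (0%:R)];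
   [:: (0%:R); (0%:R); (0%:R); (-1%:R); (0%:R); (1%:R); (0%:R); (0%:R)];
   [:: (0%:R); (0%:R); (0%:R); (0%:R); (0%:R); (0%:R); (0%:R); (-2%:R)]].
Definition Pi_su21_L13p : seq (seq rat) :=
  [:: [:: (1%:R); (0%:R); (0%:R); (0%:R); (0%:R); (0%:R); (0%:R); (0%:R)];
   [:: (0%:R); (1%:R); (0%:R); (0%:R); (0%:R); (0%:R); (0%:R); (0%:R)];
   [:: (0%:R); (0%:R); (1%:R); (0%:R); (0%:R); (0%:R); (0%:R); (0%:R)];
   [:: (0%:R); (0%:R); (0%:R); (-(1%:R / 2%:R)); (0%:R); (0%:R); (-(1%:R / 2%:R)); (0%:R)];
   [:: (0%:R); (0%:R); (0%:R); (0%:R); ((1%:R / 2%:R)); (-(1%:R / 2%:R)); (0%:R); (0%:R)];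
   [:: (0%:R); (0%:R); (0%:R); (-(1%:R / 2%:R)); (0%:R); (0%:R); ((1%:R / 2%:R)); (0%:R)];
   [:: (0%:R); (0%:R); (0%:R); (0%:R); ((1%:R / 2%:R)); ((1%:R / 2%:R)); (0%:R); (0%:R)];
   [:: (0%:R); (0%:R); (0%:R); (0%:R); (0%:R); (0%:R); (0%:R); (-(1%:R / 2%:R))]].
Definition w_su21_L13p : seq nat := [:: 0; 0; 0; 1; 1; 1; 1; 2].


Lemma c_su21_L13p (R : realType) : su21_contracts_onto (@L8_13 R 1).
Proof.
rewrite L8_13pE; apply: (claim_cmx (Q := Q_su21_L13p) (Qi := Qi_su21_L13p) (P := P_su21_L13p) (Pi := Pi_su21_L13p) (w := w_su21_L13p)).
  exact: iso_su21.
by vm_compute.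
Qed.

Definition Q_su21_L14 : seq (seq rat) :=
  [:: [:: (0%:R); ((1%:R / 2%:R)); (-(1%:R / 2%:R)); (0%:R); (0%:R); (0%:R); (0%:R); (1%:R)];
   [:: (0%:R); (0%:R); (0%:R); (0%:R); (0%:R); (0%:R); (0%:R); (-2%:R)];
   [:: (0%:R); (0%:R); (0%:R); (0%:R); (3%:R); (1%:R); (0%:R); (0%:R)];
   [:: (0%:R); (0%:R); (0%:R); (3%:R); (0%:R); (0%:R); (-1%:R); (0%:R)];
   [:: (1%:R); (0%:R); (0%:R); (0%:R); (0%:R); (0%:R); (0%:R); (0%:R)];
   [:: (0%:R); (-(1%:R / 2%:R)); (-(1%:R / 2%:R)); (0%:R); (0%:R); (0%:R); (0%:R); (0%:R)];
   [:: (0%:R); (0%:R); (0%:R); (0%:R); (-3%:R); (1%:R); (0%:R); (0%:R)];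
   [:: (0%:R); (0%:R); (0%:R); (-3%:R); (0%:R); (0%:R); (-1%:R); (0%:R)]].
Definition Qi_su21_L14 : seq (seq rat) :=
  [:: [:: (0%:R); (0%:R); (0%:R); (0%:R); (1%:R); (0%:R); (0%:R); (0%:R)];
   [:: (1%:R); ((1%:R / 2%:R)); (0%:R); (0%:R); (0%:R); (-1%:R); (0%:R); (0%:R)];
   [:: (-1%:R); (-(1%:R / 2%:R)); (0%:R); (0%:R); (0%:R); (-1%:R); (0%:R); (0%:R)];
   [:: (0%:R); (0%:R); (0%:R); ((1%:R / 6%:R)); (0%:R); (0%:R); (0%:R); (-(1%:R / 6%:R))];
   [:: (0%:R); (0%:R); ((1%:R / 6%:R)); (0%:R); (0%:R); (0%:R); (-(1%:R / 6%:R)); (0%:R)];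
   [:: (0%:R); (0%:R); ((1%:R / 2%:R)); (0%:R); (0%:R); (0%:R); ((1%:R / 2%:R)); (0%:R)];
   [:: (0%:R); (0%:R); (0%:R); (-(1%:R / 2%:R)); (0%:R); (0%:R); (0%:R); (-(1%:R / 2%:R))];
   [:: (0%:R); (-(1%:R / 2%:R)); (0%:R); (0%:R); (0%:R); (0%:R); (0%:R); (0%:R)]].
Definition P_su21_L14 : seq (seq rat) :=
  [:: [:: (1%:R); (0%:R); (0%:R); (0%:R); (0%:R); (0%:R); (0%:R); (0%:R)];
   [:: (0%:R); (1%:R); (0%:R); (0%:R); (0%:R); (0%:R); (0%:R); (0%:R)];
   [:: (0%:R); (0%:R); (1%:R); (0%:R); (0%:R); (0%:R); (0%:R); (0%:R)];
   [:: (0%:R); (0%:R); (0%:R); (1%:R); (0%:R); (0%:R); (0%:R); (0%:R)];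
   [:: (0%:R); (0%:R); (0%:R); (0%:R); (1%:R); (0%:R); (0%:R); (0%:R)];
   [:: (0%:R); (0%:R); (0%:R); (0%:R); (0%:R); (1%:R); (0%:R); (0%:R)];
   [:: (0%:R); (0%:R); (0%:R); (0%:R); (0%:R); (0%:R); (1%:R); (0%:R)];
   [:: (0%:R); (0%:R); (0%:R); (0%:R); (0%:R); (0%:R); (0%:R); (-1%:R)]].
Definition Pi_su21_L14 : seq (seq rat) :=
  [:: [:: (1%:R); (0%:R); (0%:R); (0%:R); (0%:R); (0%:R); (0%:R); (0%:R)];
   [:: (0%:R); (1%:R); (0%:R); (0%:R); (0%:R); (0%:R); (0%:R); (0%:R)];
   [:: (0%:R); (0%:R); (1%:R); (0%:R); (0%:R); (0%:R); (0%:R); (0%:R)];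
   [:: (0%:R); (0%:R); (0%:R); (1%:R); (0%:R); (0%:R); (0%:R); (0%:R)];
   [:: (0%:R); (0%:R); (0%:R); (0%:R); (1%:R); (0%:R); (0%:R); (0%:R)];
   [:: (0%:R); (0%:R); (0%:R); (0%:R); (0%:R); (1%:R); (0%:R); (0%:R)];
   [:: (0%:R); (0%:R); (0%:R); (0%:R); (0%:R); (0%:R); (1%:R); (0%:R)];
   [:: (0%:R); (0%:R); (0%:R); (0%:R); (0%:R); (0%:R); (0%:R); (-1%:R)]].
Definition w_su21_L14 : seq nat := [:: 0; 0; 0; 2; 2; 1; 1; 1].


Lemma c_su21_L14 (R : realType) : su21_contracts_onto (@L8_14 R).
Proof.
rewrite L8_14E; apply: (claim_cmx (Q := Q_su21_L14) (Qi := Qi_su21_L14) (P := P_su21_L14) (Pi := Pi_su21_L14) (w := w_su21_L14)).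
  exact: iso_su21.
by vm_compute.
Qed.

Definition Q_su21_L15 : seq (seq rat) :=
  [:: [:: (0%:R); ((1%:R / 2%:R)); (-(1%:R / 2%:R)); (0%:R); (0%:R); (0%:R); (0%:R); (1%:R)];
   [:: (0%:R); (0%:R); (0%:R); (0%:R); (0%:R); (0%:R); (0%:R); (-2%:R)];
   [:: (0%:R); (0%:R); (0%:R); (0%:R); (3%:R); (1%:R); (0%:R); (0%:R)];
   [:: (0%:R); (0%:R); (0%:R); (3%:R); (0%:R); (0%:R); (-1%:R); (0%:R)];
   [:: (1%:R); (0%:R); (0%:R); (0%:R); (0%:R); (0%:R); (0%:R); (0%:R)];
   [:: (0%:R); (-(1%:R / 2%:R)); (-(1%:R / 2%:R)); (0%:R); (0%:R); (0%:R); (0%:R); (0%:R)];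
   [:: (0%:R); (0%:R); (0%:R); (0%:R); (-3%:R); (1%:R); (0%:R); (0%:R)];
   [:: (0%:R); (0%:R); (0%:R); (-3%:R); (0%:R); (0%:R); (-1%:R); (0%:R)]].
Definition Qi_su21_L15 : seq (seq rat) :=
  [:: [:: (0%:R); (0%:R); (0%:R); (0%:R); (1%:R); (0%:R); (0%:R); (0%:R)];
   [:: (1%:R); ((1%:R / 2%:R)); (0%:R); (0%:R); (0%:R); (-1%:R); (0%:R); (0%:R)];
   [:: (-1%:R); (-(1%:R / 2%:R)); (0%:R); (0%:R); (0%:R); (-1%:R); (0%:R); (0%:R)];
   [:: (0%:R); (0%:R); (0%:R); ((1%:R / 6%:R)); (0%:R); (0%:R); (0%:R); (-(1%:R / 6%:R))];
   [:: (0%:R); (0%:R); ((1%:R / 6%:R)); (0%:R); (0%:R); (0%:R); (-(1%:R / 6%:R)); (0%:R)];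
   [:: (0%:R); (0%:R); ((1%:R / 2%:R)); (0%:R); (0%:R); (0%:R); ((1%:R / 2%:R)); (0%:R)];
   [:: (0%:R); (0%:R); (0%:R); (-(1%:R / 2%:R)); (0%:R); (0%:R); (0%:R); (-(1%:R / 2%:R))];
   [:: (0%:R); (-(1%:R / 2%:R)); (0%:R); (0%:R); (0%:R); (0%:R); (0%:R); (0%:R)]].
Definition P_su21_L15 : seq (seq rat) :=
  [:: [:: (1%:R); (0%:R); (0%:R); (0%:R); (0%:R); (0%:R); (0%:R); (0%:R)];
   [:: (0%:R); (1%:R); (0%:R); (0%:R); (0%:R); (0%:R); (0%:R); (0%:R)];
   [:: (0%:R); (0%:R); (1%:R); (0%:R); (0%:R); (0%:R); (0%:R); (0%:R)];
   [:: (0%:R); (0%:R); (0%:R); ((1%:R / 2%:R)); (0%:R); (0%:R); (0%:R); (0%:R)];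
   [:: (0%:R); (0%:R); (0%:R); (0%:R); ((1%:R / 2%:R)); (0%:R); (0%:R); (0%:R)];
   [:: (0%:R); (0%:R); (0%:R); (0%:R); (0%:R); (1%:R); (0%:R); (0%:R)];
   [:: (0%:R); (0%:R); (0%:R); (0%:R); (0%:R); (0%:R); (1%:R); (0%:R)];
   [:: (0%:R); (0%:R); (0%:R); (0%:R); (0%:R); (0%:R); (0%:R); (-(1%:R / 2%:R))]].
Definition Pi_su21_L15 : seq (seq rat) :=
  [:: [:: (1%:R); (0%:R); (0%:R); (0%:R); (0%:R); (0%:R); (0%:R); (0%:R)];
   [:: (0%:R); (1%:R); (0%:R); (0%:R); (0%:R); (0%:R); (0%:R); (0%:R)];
   [:: (0%:R); (0%:R); (1%:R); (0%:R); (0%:R); (0%:R); (0%:R); (0%:R)];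
   [:: (0%:R); (0%:R); (0%:R); (2%:R); (0%:R); (0%:R); (0%:R); (0%:R)];
   [:: (0%:R); (0%:R); (0%:R); (0%:R); (2%:R); (0%:R); (0%:R); (0%:R)];
   [:: (0%:R); (0%:R); (0%:R); (0%:R); (0%:R); (1%:R); (0%:R); (0%:R)];
   [:: (0%:R); (0%:R); (0%:R); (0%:R); (0%:R); (0%:R); (1%:R); (0%:R)];
   [:: (0%:R); (0%:R); (0%:R); (0%:R); (0%:R); (0%:R); (0%:R); (-2%:R)]].
Definition w_su21_L15 : seq nat := [:: 0; 0; 0; 3; 3; 1; 1; 2].


Lemma c_su21_L15 (R : realType) : su21_contracts_onto (@L8_15 R).
Proof.
rewrite L8_15E; apply: (claim_cmx (Q := Q_su21_L15) (Qi := Qi_su21_L15) (P := P_su21_L15) (Pi := Pi_su21_L15) (w := w_su21_L15)).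
  exact: iso_su21.
by vm_compute.
Qed.

Definition Q_su21_L18 : seq (seq rat) :=
  [:: [:: (0%:R); ((1%:R / 2%:R)); (-(1%:R / 2%:R)); (0%:R); (0%:R); (0%:R); (0%:R); (1%:R)];
   [:: (0%:R); (0%:R); (0%:R); (0%:R); (0%:R); (0%:R); (0%:R); (-2%:R)];
   [:: (0%:R); (0%:R); (0%:R); (1%:R); (0%:R); (0%:R); (0%:R); (0%:R)];
   [:: (0%:R); (0%:R); (0%:R); (0%:R); (1%:R); (0%:R); (0%:R); (0%:R)];
   [:: (1%:R); (0%:R); (0%:R); (0%:R); (0%:R); (0%:R); (0%:R); (0%:R)];
   [:: (0%:R); (-(1%:R / 2%:R)); (-(1%:R / 2%:R)); (0%:R); (0%:R); (0%:R); (0%:R); (0%:R)];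
   [:: (0%:R); (0%:R); (0%:R); (0%:R); (0%:R); (1%:R); (0%:R); (0%:R)];
   [:: (0%:R); (0%:R); (0%:R); (0%:R); (0%:R); (0%:R); (1%:R); (0%:R)]].
Definition Qi_su21_L18 : seq (seq rat) :=
  [:: [:: (0%:R); (0%:R); (0%:R); (0%:R); (1%:R); (0%:R); (0%:R); (0%:R)];
   [:: (1%:R); ((1%:R / 2%:R)); (0%:R); (0%:R); (0%:R); (-1%:R); (0%:R); (0%:R)];
   [:: (-1%:R); (-(1%:R / 2%:R)); (0%:R); (0%:R); (0%:R); (-1%:R); (0%:R); (0%:R)];
   [:: (0%:R); (0%:R); (1%:R); (0%:R); (0%:R); (0%:R); (0%:R); (0%:R)];
   [:: (0%:R); (0%:R); (0%:R); (1%:R); (0%:R); (0%:R); (0%:R); (0%:R)];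
   [:: (0%:R); (0%:R); (0%:R); (0%:R); (0%:R); (0%:R); (1%:R); (0%:R)];
   [:: (0%:R); (0%:R); (0%:R); (0%:R); (0%:R); (0%:R); (0%:R); (1%:R)];
   [:: (0%:R); (-(1%:R / 2%:R)); (0%:R); (0%:R); (0%:R); (0%:R); (0%:R); (0%:R)]].
Definition P_su21_L18 : seq (seq rat) :=
  [:: [:: (1%:R); (0%:R); (0%:R); (0%:R); (0%:R); (0%:R); (0%:R); (0%:R)];
   [:: (0%:R); (1%:R); (0%:R); (0%:R); (0%:R); (0%:R); (0%:R); (0%:R)];
   [:: (0%:R); (0%:R); (1%:R); (0%:R); (0%:R); (0%:R); (0%:R); (0%:R)];
   [:: (0%:R); (0%:R); (0%:R); (-1%:R); (0%:R); (-1%:R); (0%:R); (0%:R)];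
   [:: (0%:R); (0%:R); (0%:R); (0%:R); (1%:R); (0%:R); (1%:R); (0%:R)];
   [:: (0%:R); (0%:R); (0%:R); (0%:R); (-1%:R); (0%:R); (1%:R); (0%:R)];
   [:: (0%:R); (0%:R); (0%:R); (-1%:R); (0%:R); (1%:R); (0%:R); (0%:R)];
   [:: (0%:R); (0%:R); (0%:R); (0%:R); (0%:R); (0%:R); (0%:R); (3%:R)]].
Definition Pi_su21_L18 : seq (seq rat) :=
  [:: [:: (1%:R); (0%:R); (0%:R); (0%:R); (0%:R); (0%:R); (0%:R); (0%:R)];
   [:: (0%:R); (1%:R); (0%:R); (0%:R); (0%:R); (0%:R); (0%:R); (0%:R)];
   [:: (0%:R); (0%:R); (1%:R); (0%:R); (0%:R); (0%:R); (0%:R); (0%:R)];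
   [:: (0%:R); (0%:R); (0%:R); (-(1%:R / 2%:R)); (0%:R); (0%:R); (-(1%:R / 2%:R)); (0%:R)];
   [:: (0%:R); (0%:R); (0%:R); (0%:R); ((1%:R / 2%:R)); (-(1%:R / 2%:R)); (0%:R); (0%:R)];
   [:: (0%:R); (0%:R); (0%:R); (-(1%:R / 2%:R)); (0%:R); (0%:R); ((1%:R / 2%:R)); (0%:R)];
   [:: (0%:R); (0%:R); (0%:R); (0%:R); ((1%:R / 2%:R)); ((1%:R / 2%:R)); (0%:R); (0%:R)];
   [:: (0%:R); (0%:R); (0%:R); (0%:R); (0%:R); (0%:R); (0%:R); ((1%:R / 3%:R))]].
Definition w_su21_L18 : seq nat := [:: 0; 0; 0; 1; 1; 1; 1; 0].


Lemma c_su21_L18 (R : realType) : su21_contracts_onto (@L8_18_0 R).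
Proof.
rewrite L8_18_0E; apply: (claim_cmx (Q := Q_su21_L18) (Qi := Qi_su21_L18) (P := P_su21_L18) (Pi := Pi_su21_L18) (w := w_su21_L18)).
  exact: iso_su21.
by vm_compute.
Qed.

Definition Q_su21_L21 : seq (seq rat) :=
  [:: [:: (0%:R); (0%:R); (0%:R); (-1%:R); (0%:R); (4%:R); (0%:R); (-24%:R)];
   [:: (0%:R); (0%:R); (0%:R); (0%:R); (0%:R); (-8%:R); (0%:R); (0%:R)];
   [:: (0%:R); (1%:R); (-1%:R); (0%:R); (0%:R); (0%:R); (0%:R); (0%:R)];
   [:: (0%:R); (0%:R); (0%:R); (0%:R); (-2%:R); (0%:R); (12%:R); (0%:R)];
   [:: (2%:R); (0%:R); (0%:R); (0%:R); (0%:R); (0%:R); (0%:R); (0%:R)];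
   [:: (0%:R); (0%:R); (0%:R); (1%:R); (0%:R); (0%:R); (0%:R); (-24%:R)];
   [:: (0%:R); (1%:R); (1%:R); (0%:R); (0%:R); (0%:R); (0%:R); (0%:R)];
   [:: (0%:R); (0%:R); (0%:R); (0%:R); (2%:R); (0%:R); (12%:R); (0%:R)]].
Definition Qi_su21_L21 : seq (seq rat) :=
  [:: [:: (0%:R); (0%:R); (0%:R); (0%:R); ((1%:R / 2%:R)); (0%:R); (0%:R); (0%:R)];
   [:: (0%:R); (0%:R); ((1%:R / 2%:R)); (0%:R); (0%:R); (0%:R); ((1%:R / 2%:R)); (0%:R)];
   [:: (0%:R); (0%:R); (-(1%:R / 2%:R)); (0%:R); (0%:R); (0%:R); ((1%:R / 2%:R)); (0%:R)];
   [:: (-(1%:R / 2%:R)); (-(1%:R / 4%:R)); (0%:R); (0%:R); (0%:R); ((1%:R / 2%:R)); (0%:R); (0%:R)];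
   [:: (0%:R); (0%:R); (0%:R); (-(1%:R / 4%:R)); (0%:R); (0%:R); (0%:R); ((1%:R / 4%:R))];
   [:: (0%:R); (-(1%:R / 8%:R)); (0%:R); (0%:R); (0%:R); (0%:R); (0%:R); (0%:R)];
   [:: (0%:R); (0%:R); (0%:R); ((1%:R / 24%:R)); (0%:R); (0%:R); (0%:R); ((1%:R / 24%:R))];
   [:: (-(1%:R / 48%:R)); (-(1%:R / 96%:R)); (0%:R); (0%:R); (0%:R); (-(1%:R / 48%:R)); (0%:R); (0%:R)]].
Definition P_su21_L21 : seq (seq rat) :=
  [:: [:: (1%:R); (0%:R); (0%:R); (0%:R); (0%:R); (0%:R); (0%:R); (0%:R)];
   [:: (0%:R); (1%:R); (0%:R); (0%:R); (0%:R); (0%:R); (0%:R); (0%:R)];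
   [:: (0%:R); (0%:R); (1%:R); (0%:R); (0%:R); (0%:R); (0%:R); (0%:R)];
   [:: (0%:R); (0%:R); (0%:R); ((1%:R / 24%:R)); (0%:R); (0%:R); (0%:R); (0%:R)];
   [:: (0%:R); (0%:R); (0%:R); (0%:R); ((1%:R / 24%:R)); (0%:R); (0%:R); (0%:R)];
   [:: (0%:R); (0%:R); (0%:R); (0%:R); (0%:R); ((1%:R / 12%:R)); (0%:R); (0%:R)];
   [:: (0%:R); (0%:R); (0%:R); (0%:R); (0%:R); (0%:R); ((1%:R / 4%:R)); (0%:R)];
   [:: (0%:R); (0%:R); (0%:R); (0%:R); (0%:R); (0%:R); (0%:R); (1%:R)]].
Definition Pi_su21_L21 : seq (seq rat) :=
  [:: [:: (1%:R); (0%:R); (0%:R); (0%:R); (0%:R); (0%:R); (0%:R); (0%:R)];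
   [:: (0%:R); (1%:R); (0%:R); (0%:R); (0%:R); (0%:R); (0%:R); (0%:R)];
   [:: (0%:R); (0%:R); (1%:R); (0%:R); (0%:R); (0%:R); (0%:R); (0%:R)];
   [:: (0%:R); (0%:R); (0%:R); (24%:R); (0%:R); (0%:R); (0%:R); (0%:R)];
   [:: (0%:R); (0%:R); (0%:R); (0%:R); (24%:R); (0%:R); (0%:R); (0%:R)];
   [:: (0%:R); (0%:R); (0%:R); (0%:R); (0%:R); (12%:R); (0%:R); (0%:R)];
   [:: (0%:R); (0%:R); (0%:R); (0%:R); (0%:R); (0%:R); (4%:R); (0%:R)];
   [:: (0%:R); (0%:R); (0%:R); (0%:R); (0%:R); (0%:R); (0%:R); (1%:R)]].
Definition w_su21_L21 : seq nat := [:: 0; 0; 0; 1; 1; 1; 1; 1].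


Lemma c_su21_L21 (R : realType) : su21_contracts_onto (@L8_21 R).
Proof.
rewrite L8_21E; apply: (claim_cmx (Q := Q_su21_L21) (Qi := Qi_su21_L21) (P := P_su21_L21) (Pi := Pi_su21_L21) (w := w_su21_L21)).
  exact: iso_su21.
by vm_compute.
Qed.

Definition Q_sl3R_L5 : seq (seq rat) :=
  [:: [:: (0%:R); (0%:R); (0%:R); (1%:R); (0%:R); (0%:R); (0%:R); (0%:R)];
   [:: (0%:R); (0%:R); (0%:R); (-1%:R); (1%:R); (0%:R); (0%:R); (0%:R)];
   [:: (0%:R); (0%:R); (-1%:R); (0%:R); (0%:R); (1%:R); (0%:R); (0%:R)];
   [:: (0%:R); (1%:R); (0%:R); (0%:R); (0%:R); (0%:R); (1%:R); (0%:R)];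
   [:: (0%:R); (0%:R); (1%:R); (0%:R); (0%:R); (1%:R); (0%:R); (0%:R)];
   [:: (-1%:R); (0%:R); (0%:R); (0%:R); (0%:R); (0%:R); (0%:R); (1%:R)];
   [:: (0%:R); (-1%:R); (0%:R); (0%:R); (0%:R); (0%:R); (1%:R); (0%:R)];
   [:: (1%:R); (0%:R); (0%:R); (0%:R); (0%:R); (0%:R); (0%:R); (1%:R)]].
Definition Qi_sl3R_L5 : seq (seq rat) :=
  [:: [:: (0%:R); (0%:R); (0%:R); (0%:R); (0%:R); (-(1%:R / 2%:R)); (0%:R); ((1%:R / 2%:R))];
   [:: (0%:R); (0%:R); (0%:R); ((1%:R / 2%:R)); (0%:R); (0%:R); (-(1%:R / 2%:R)); (0%:R)];
   [:: (0%:R); (0%:R); (-(1%:R / 2%:R)); (0%:R); ((1%:R / 2%:R)); (0%:R); (0%:R); (0%:R)];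
   [:: (1%:R); (0%:R); (0%:R); (0%:R); (0%:R); (0%:R); (0%:R); (0%:R)];
   [:: (1%:R); (1%:R); (0%:R); (0%:R); (0%:R); (0%:R); (0%:R); (0%:R)];
   [:: (0%:R); (0%:R); ((1%:R / 2%:R)); (0%:R); ((1%:R / 2%:R)); (0%:R); (0%:R); (0%:R)];
   [:: (0%:R); (0%:R); (0%:R); ((1%:R / 2%:R)); (0%:R); (0%:R); ((1%:R / 2%:R)); (0%:R)];
   [:: (0%:R); (0%:R); (0%:R); (0%:R); (0%:R); ((1%:R / 2%:R)); (0%:R); ((1%:R / 2%:R))]].
Definition P_sl3R_L5 : seq (seq rat) :=
  [:: [:: (1%:R); (0%:R); (0%:R); (0%:R); (0%:R); (0%:R); (0%:R); (0%:R)];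
   [:: (0%:R); (1%:R); (0%:R); (0%:R); (0%:R); (0%:R); (0%:R); (0%:R)];
   [:: (0%:R); (0%:R); (1%:R); (0%:R); (0%:R); (0%:R); (0%:R); (0%:R)];
   [:: (0%:R); (0%:R); (0%:R); (0%:R); (0%:R); (-4%:R); (0%:R); (0%:R)];
   [:: (0%:R); (0%:R); (0%:R); (4%:R); (-2%:R); (0%:R); (0%:R); (0%:R)];
   [:: (0%:R); (0%:R); (0%:R); (0%:R); (0%:R); (0%:R); (0%:R); (2%:R)];
   [:: (0%:R); (0%:R); (0%:R); (0%:R); (0%:R); (0%:R); (-2%:R); (0%:R)];
   [:: (0%:R); (0%:R); (0%:R); (0%:R); (1%:R); (0%:R); (0%:R); (0%:R)]].
Definition Pi_sl3R_L5 : seq (seq rat) :=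
  [:: [:: (1%:R); (0%:R); (0%:R); (0%:R); (0%:R); (0%:R); (0%:R); (0%:R)];
   [:: (0%:R); (1%:R); (0%:R); (0%:R); (0%:R); (0%:R); (0%:R); (0%:R)];
   [:: (0%:R); (0%:R); (1%:R); (0%:R); (0%:R); (0%:R); (0%:R); (0%:R)];
   [:: (0%:R); (0%:R); (0%:R); (0%:R); ((1%:R / 4%:R)); (0%:R); (0%:R); ((1%:R / 2%:R))];
   [:: (0%:R); (0%:R); (0%:R); (0%:R); (0%:R); (0%:R); (0%:R); (1%:R)];
   [:: (0%:R); (0%:R); (0%:R); (-(1%:R / 4%:R)); (0%:R); (0%:R); (0%:R); (0%:R)];
   [:: (0%:R); (0%:R); (0%:R); (0%:R); (0%:R); (0%:R); (-(1%:R / 2%:R)); (0%:R)];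
   [:: (0%:R); (0%:R); (0%:R); (0%:R); (0%:R); ((1%:R / 2%:R)); (0%:R); (0%:R)]].
Definition w_sl3R_L5 : seq nat := [:: 0; 0; 0; 1; 1; 1; 1; 1].


Lemma c_sl3R_L5 (R : realType) : sl3R_contracts_onto (@L8_5 R).
Proof.
rewrite L8_5E; apply: (claim_rmx (Q := Q_sl3R_L5) (Qi := Qi_sl3R_L5) (P := P_sl3R_L5) (Pi := Pi_sl3R_L5) (w := w_sl3R_L5)).
  exact: iso_sl3R.
by vm_compute.
Qed.

Definition Q_sl3R_L13m : seq (seq rat) :=
  [:: [:: (1%:R); (0%:R); (0%:R); (0%:R); (0%:R); (0%:R); (0%:R); (1%:R)];
   [:: (-1%:R); (0%:R); (0%:R); (0%:R); (0%:R); (0%:R); (0%:R); (1%:R)];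
   [:: (0%:R); (1%:R); (0%:R); (0%:R); (0%:R); (0%:R); (0%:R); (0%:R)];
   [:: (0%:R); (0%:R); (0%:R); (1%:R); (0%:R); (0%:R); (0%:R); (0%:R)];
   [:: (0%:R); (0%:R); (1%:R); (0%:R); (0%:R); (0%:R); (0%:R); (0%:R)];
   [:: (0%:R); (0%:R); (0%:R); (0%:R); (1%:R); (0%:R); (0%:R); (0%:R)];
   [:: (0%:R); (0%:R); (0%:R); (0%:R); (0%:R); (1%:R); (0%:R); (0%:R)];
   [:: (0%:R); (0%:R); (0%:R); (0%:R); (0%:R); (0%:R); (1%:R); (0%:R)]].
Definition Qi_sl3R_L13m : seq (seq rat) :=
  [:: [:: ((1%:R / 2%:R)); (-(1%:R / 2%:R)); (0%:R); (0%:R); (0%:R); (0%:R); (0%:R); (0%:R)];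
   [:: (0%:R); (0%:R); (1%:R); (0%:R); (0%:R); (0%:R); (0%:R); (0%:R)];
   [:: (0%:R); (0%:R); (0%:R); (0%:R); (1%:R); (0%:R); (0%:R); (0%:R)];
   [:: (0%:R); (0%:R); (0%:R); (1%:R); (0%:R); (0%:R); (0%:R); (0%:R)];
   [:: (0%:R); (0%:R); (0%:R); (0%:R); (0%:R); (1%:R); (0%:R); (0%:R)];
   [:: (0%:R); (0%:R); (0%:R); (0%:R); (0%:R); (0%:R); (1%:R); (0%:R)];
   [:: (0%:R); (0%:R); (0%:R); (0%:R); (0%:R); (0%:R); (0%:R); (1%:R)];
   [:: ((1%:R / 2%:R)); ((1%:R / 2%:R)); (0%:R); (0%:R); (0%:R); (0%:R); (0%:R); (0%:R)]].
Definition P_sl3R_L13m : seq (seq rat) :=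
  [:: [:: (1%:R); (0%:R); (0%:R); (0%:R); (0%:R); (0%:R); (0%:R); (0%:R)];
   [:: (0%:R); (1%:R); (0%:R); (0%:R); (0%:R); (0%:R); (0%:R); (0%:R)];
   [:: (0%:R); (0%:R); (1%:R); (0%:R); (0%:R); (0%:R); (0%:R); (0%:R)];
   [:: (0%:R); (0%:R); (0%:R); (1%:R); (0%:R); (0%:R); (-(1%:R / 2%:R)); (0%:R)];
   [:: (0%:R); (0%:R); (0%:R); (0%:R); (1%:R); ((1%:R / 2%:R)); (0%:R); (0%:R)];
   [:: (0%:R); (0%:R); (0%:R); (1%:R); (0%:R); (0%:R); ((1%:R / 2%:R)); (0%:R)];
   [:: (0%:R); (0%:R); (0%:R); (0%:R); (1%:R); (-(1%:R / 2%:R)); (0%:R); (0%:R)];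
   [:: (0%:R); (0%:R); (0%:R); (0%:R); (0%:R); (0%:R); (0%:R); (2%:R)]].
Definition Pi_sl3R_L13m : seq (seq rat) :=
  [:: [:: (1%:R); (0%:R); (0%:R); (0%:R); (0%:R); (0%:R); (0%:R); (0%:R)];
   [:: (0%:R); (1%:R); (0%:R); (0%:R); (0%:R); (0%:R); (0%:R); (0%:R)];
   [:: (0%:R); (0%:R); (1%:R); (0%:R); (0%:R); (0%:R); (0%:R); (0%:R)];
   [:: (0%:R); (0%:R); (0%:R); ((1%:R / 2%:R)); (0%:R); ((1%:R / 2%:R)); (0%:R); (0%:R)];
   [:: (0%:R); (0%:R); (0%:R); (0%:R); ((1%:R / 2%:R)); (0%:R); ((1%:R / 2%:R)); (0%:R)];
   [:: (0%:R); (0%:R); (0%:R); (0%:R); (1%:R); (0%:R); (-1%:R); (0%:R)];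
   [:: (0%:R); (0%:R); (0%:R); (-1%:R); (0%:R); (1%:R); (0%:R); (0%:R)];
   [:: (0%:R); (0%:R); (0%:R); (0%:R); (0%:R); (0%:R); (0%:R); ((1%:R / 2%:R))]].
Definition w_sl3R_L13m : seq nat := [:: 0; 0; 0; 1; 1; 1; 1; 2].


Lemma c_sl3R_L13m (R : realType) : sl3R_contracts_onto (@L8_13 R (-1)).
Proof.
rewrite L8_13mE; apply: (claim_rmx (Q := Q_sl3R_L13m) (Qi := Qi_sl3R_L13m) (P := P_sl3R_L13m) (Pi := Pi_sl3R_L13m) (w := w_sl3R_L13m)).
  exact: iso_sl3R.
by vm_compute.
Qed.

Definition Q_sl3R_L14 : seq (seq rat) :=
  [:: [:: (1%:R); (0%:R); (0%:R); (0%:R); (0%:R); (0%:R); (0%:R); (1%:R)];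
   [:: (-1%:R); (0%:R); (0%:R); (0%:R); (0%:R); (0%:R); (0%:R); (1%:R)];
   [:: (0%:R); (1%:R); (0%:R); (0%:R); (0%:R); (0%:R); (0%:R); (0%:R)];
   [:: (0%:R); (0%:R); (0%:R); (3%:R); (0%:R); (1%:R); (0%:R); (0%:R)];
   [:: (0%:R); (0%:R); (1%:R); (0%:R); (0%:R); (0%:R); (0%:R); (0%:R)];
   [:: (0%:R); (0%:R); (0%:R); (0%:R); (3%:R); (0%:R); (1%:R); (0%:R)];
   [:: (0%:R); (0%:R); (0%:R); (0%:R); (3%:R); (0%:R); (-1%:R); (0%:R)];
   [:: (0%:R); (0%:R); (0%:R); (-3%:R); (0%:R); (1%:R); (0%:R); (0%:R)]].
Definition Qi_sl3R_L14 : seq (seq rat) :=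
  [:: [:: ((1%:R / 2%:R)); (-(1%:R / 2%:R)); (0%:R); (0%:R); (0%:R); (0%:R); (0%:R); (0%:R)];
   [:: (0%:R); (0%:R); (1%:R); (0%:R); (0%:R); (0%:R); (0%:R); (0%:R)];
   [:: (0%:R); (0%:R); (0%:R); (0%:R); (1%:R); (0%:R); (0%:R); (0%:R)];
   [:: (0%:R); (0%:R); (0%:R); ((1%:R / 6%:R)); (0%:R); (0%:R); (0%:R); (-(1%:R / 6%:R))];
   [:: (0%:R); (0%:R); (0%:R); (0%:R); (0%:R); ((1%:R / 6%:R)); ((1%:R / 6%:R)); (0%:R)];
   [:: (0%:R); (0%:R); (0%:R); ((1%:R / 2%:R)); (0%:R); (0%:R); (0%:R); ((1%:R / 2%:R))];
   [:: (0%:R); (0%:R); (0%:R); (0%:R); (0%:R); ((1%:R / 2%:R)); (-(1%:R / 2%:R)); (0%:R)];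
   [:: ((1%:R / 2%:R)); ((1%:R / 2%:R)); (0%:R); (0%:R); (0%:R); (0%:R); (0%:R); (0%:R)]].
Definition P_sl3R_L14 : seq (seq rat) :=
  [:: [:: (1%:R); (0%:R); (0%:R); (0%:R); (0%:R); (0%:R); (0%:R); (0%:R)];
   [:: (0%:R); (1%:R); (0%:R); (0%:R); (0%:R); (0%:R); (0%:R); (0%:R)];
   [:: (0%:R); (0%:R); (1%:R); (0%:R); (0%:R); (0%:R); (0%:R); (0%:R)];
   [:: (0%:R); (0%:R); (0%:R); (1%:R); (0%:R); (0%:R); (0%:R); (0%:R)];
   [:: (0%:R); (0%:R); (0%:R); (0%:R); (1%:R); (0%:R); (0%:R); (0%:R)];
   [:: (0%:R); (0%:R); (0%:R); (0%:R); (0%:R); (1%:R); (0%:R); (0%:R)];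
   [:: (0%:R); (0%:R); (0%:R); (0%:R); (0%:R); (0%:R); (1%:R); (0%:R)];
   [:: (0%:R); (0%:R); (0%:R); (0%:R); (0%:R); (0%:R); (0%:R); (-1%:R)]].
Definition Pi_sl3R_L14 : seq (seq rat) :=
  [:: [:: (1%:R); (0%:R); (0%:R); (0%:R); (0%:R); (0%:R); (0%:R); (0%:R)];
   [:: (0%:R); (1%:R); (0%:R); (0%:R); (0%:R); (0%:R); (0%:R); (0%:R)];
   [:: (0%:R); (0%:R); (1%:R); (0%:R); (0%:R); (0%:R); (0%:R); (0%:R)];
   [:: (0%:R); (0%:R); (0%:R); (1%:R); (0%:R); (0%:R); (0%:R); (0%:R)];
   [:: (0%:R); (0%:R); (0%:R); (0%:R); (1%:R); (0%:R); (0%:R); (0%:R)];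
   [:: (0%:R); (0%:R); (0%:R); (0%:R); (0%:R); (1%:R); (0%:R); (0%:R)];
   [:: (0%:R); (0%:R); (0%:R); (0%:R); (0%:R); (0%:R); (1%:R); (0%:R)];
   [:: (0%:R); (0%:R); (0%:R); (0%:R); (0%:R); (0%:R); (0%:R); (-1%:R)]].
Definition w_sl3R_L14 : seq nat := [:: 0; 0; 0; 2; 2; 1; 1; 1].


Lemma c_sl3R_L14 (R : realType) : sl3R_contracts_onto (@L8_14 R).
Proof.
rewrite L8_14E; apply: (claim_rmx (Q := Q_sl3R_L14) (Qi := Qi_sl3R_L14) (P := P_sl3R_L14) (Pi := Pi_sl3R_L14) (w := w_sl3R_L14)).
  exact: iso_sl3R.
by vm_compute.
Qed.

Definition Q_sl3R_L15 : seq (seq rat) :=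
  [:: [:: (1%:R); (0%:R); (0%:R); (0%:R); (0%:R); (0%:R); (0%:R); (1%:R)];
   [:: (-1%:R); (0%:R); (0%:R); (0%:R); (0%:R); (0%:R); (0%:R); (1%:R)];
   [:: (0%:R); (1%:R); (0%:R); (0%:R); (0%:R); (0%:R); (0%:R); (0%:R)];
   [:: (0%:R); (0%:R); (0%:R); (3%:R); (0%:R); (1%:R); (0%:R); (0%:R)];
   [:: (0%:R); (0%:R); (1%:R); (0%:R); (0%:R); (0%:R); (0%:R); (0%:R)];
   [:: (0%:R); (0%:R); (0%:R); (0%:R); (3%:R); (0%:R); (1%:R); (0%:R)];
   [:: (0%:R); (0%:R); (0%:R); (0%:R); (3%:R); (0%:R); (-1%:R); (0%:R)];
   [:: (0%:R); (0%:R); (0%:R); (-3%:R); (0%:R); (1%:R); (0%:R); (0%:R)]].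
Definition Qi_sl3R_L15 : seq (seq rat) :=
  [:: [:: ((1%:R / 2%:R)); (-(1%:R / 2%:R)); (0%:R); (0%:R); (0%:R); (0%:R); (0%:R); (0%:R)];
   [:: (0%:R); (0%:R); (1%:R); (0%:R); (0%:R); (0%:R); (0%:R); (0%:R)];
   [:: (0%:R); (0%:R); (0%:R); (0%:R); (1%:R); (0%:R); (0%:R); (0%:R)];
   [:: (0%:R); (0%:R); (0%:R); ((1%:R / 6%:R)); (0%:R); (0%:R); (0%:R); (-(1%:R / 6%:R))];
   [:: (0%:R); (0%:R); (0%:R); (0%:R); (0%:R); ((1%:R / 6%:R)); ((1%:R / 6%:R)); (0%:R)];
   [:: (0%:R); (0%:R); (0%:R); ((1%:R / 2%:R)); (0%:R); (0%:R); (0%:R); ((1%:R / 2%:R))];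
   [:: (0%:R); (0%:R); (0%:R); (0%:R); (0%:R); ((1%:R / 2%:R)); (-(1%:R / 2%:R)); (0%:R)];
   [:: ((1%:R / 2%:R)); ((1%:R / 2%:R)); (0%:R); (0%:R); (0%:R); (0%:R); (0%:R); (0%:R)]].
Definition P_sl3R_L15 : seq (seq rat) :=
  [:: [:: (1%:R); (0%:R); (0%:R); (0%:R); (0%:R); (0%:R); (0%:R); (0%:R)];
   [:: (0%:R); (1%:R); (0%:R); (0%:R); (0%:R); (0%:R); (0%:R); (0%:R)];
   [:: (0%:R); (0%:R); (1%:R); (0%:R); (0%:R); (0%:R); (0%:R); (0%:R)];
   [:: (0%:R); (0%:R); (0%:R); (1%:R); (0%:R); (0%:R); (0%:R); (0%:R)];
   [:: (0%:R); (0%:R); (0%:R); (0%:R); (1%:R); (0%:R); (0%:R); (0%:R)];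
   [:: (0%:R); (0%:R); (0%:R); (0%:R); (0%:R); (1%:R); (0%:R); (0%:R)];
   [:: (0%:R); (0%:R); (0%:R); (0%:R); (0%:R); (0%:R); (1%:R); (0%:R)];
   [:: (0%:R); (0%:R); (0%:R); (0%:R); (0%:R); (0%:R); (0%:R); (-1%:R)]].
Definition Pi_sl3R_L15 : seq (seq rat) :=
  [:: [:: (1%:R); (0%:R); (0%:R); (0%:R); (0%:R); (0%:R); (0%:R); (0%:R)];
   [:: (0%:R); (1%:R); (0%:R); (0%:R); (0%:R); (0%:R); (0%:R); (0%:R)];
   [:: (0%:R); (0%:R); (1%:R); (0%:R); (0%:R); (0%:R); (0%:R); (0%:R)];
   [:: (0%:R); (0%:R); (0%:R); (1%:R); (0%:R); (0%:R); (0%:R); (0%:R)];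
   [:: (0%:R); (0%:R); (0%:R); (0%:R); (1%:R); (0%:R); (0%:R); (0%:R)];
   [:: (0%:R); (0%:R); (0%:R); (0%:R); (0%:R); (1%:R); (0%:R); (0%:R)];
   [:: (0%:R); (0%:R); (0%:R); (0%:R); (0%:R); (0%:R); (1%:R); (0%:R)];
   [:: (0%:R); (0%:R); (0%:R); (0%:R); (0%:R); (0%:R); (0%:R); (-1%:R)]].
Definition w_sl3R_L15 : seq nat := [:: 0; 0; 0; 3; 3; 1; 1; 2].


Lemma c_sl3R_L15 (R : realType) : sl3R_contracts_onto (@L8_15 R).
Proof.
rewrite L8_15E; apply: (claim_rmx (Q := Q_sl3R_L15) (Qi := Qi_sl3R_L15) (P := P_sl3R_L15) (Pi := Pi_sl3R_L15) (w := w_sl3R_L15)).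
  exact: iso_sl3R.
by vm_compute.
Qed.

Definition Q_sl3R_L17 : seq (seq rat) :=
  [:: [:: (1%:R); (0%:R); (0%:R); (0%:R); (0%:R); (0%:R); (0%:R); (1%:R)];
   [:: (-1%:R); (0%:R); (0%:R); (0%:R); (0%:R); (0%:R); (0%:R); (1%:R)];
   [:: (0%:R); (1%:R); (0%:R); (0%:R); (0%:R); (0%:R); (0%:R); (0%:R)];
   [:: (0%:R); (0%:R); (0%:R); (1%:R); (0%:R); (0%:R); (0%:R); (0%:R)];
   [:: (0%:R); (0%:R); (1%:R); (0%:R); (0%:R); (0%:R); (0%:R); (0%:R)];
   [:: (0%:R); (0%:R); (0%:R); (0%:R); (1%:R); (0%:R); (0%:R); (0%:R)];
   [:: (0%:R); (0%:R); (0%:R); (0%:R); (0%:R); (1%:R); (0%:R); (0%:R)];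
   [:: (0%:R); (0%:R); (0%:R); (0%:R); (0%:R); (0%:R); (1%:R); (0%:R)]].
Definition Qi_sl3R_L17 : seq (seq rat) :=
  [:: [:: ((1%:R / 2%:R)); (-(1%:R / 2%:R)); (0%:R); (0%:R); (0%:R); (0%:R); (0%:R); (0%:R)];
   [:: (0%:R); (0%:R); (1%:R); (0%:R); (0%:R); (0%:R); (0%:R); (0%:R)];
   [:: (0%:R); (0%:R); (0%:R); (0%:R); (1%:R); (0%:R); (0%:R); (0%:R)];
   [:: (0%:R); (0%:R); (0%:R); (1%:R); (0%:R); (0%:R); (0%:R); (0%:R)];
   [:: (0%:R); (0%:R); (0%:R); (0%:R); (0%:R); (1%:R); (0%:R); (0%:R)];
   [:: (0%:R); (0%:R); (0%:R); (0%:R); (0%:R); (0%:R); (1%:R); (0%:R)];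
   [:: (0%:R); (0%:R); (0%:R); (0%:R); (0%:R); (0%:R); (0%:R); (1%:R)];
   [:: ((1%:R / 2%:R)); ((1%:R / 2%:R)); (0%:R); (0%:R); (0%:R); (0%:R); (0%:R); (0%:R)]].
Definition P_sl3R_L17 : seq (seq rat) :=
  [:: [:: (1%:R); (0%:R); (0%:R); (0%:R); (0%:R); (0%:R); (0%:R); (0%:R)];
   [:: (0%:R); (1%:R); (0%:R); (0%:R); (0%:R); (0%:R); (0%:R); (0%:R)];
   [:: (0%:R); (0%:R); (1%:R); (0%:R); (0%:R); (0%:R); (0%:R); (0%:R)];
   [:: (0%:R); (0%:R); (0%:R); (0%:R); (0%:R); (0%:R); (-1%:R); (0%:R)];
   [:: (0%:R); (0%:R); (0%:R); (0%:R); (0%:R); (1%:R); (0%:R); (0%:R)];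
   [:: (0%:R); (0%:R); (0%:R); (1%:R); (0%:R); (0%:R); (0%:R); (0%:R)];
   [:: (0%:R); (0%:R); (0%:R); (0%:R); (1%:R); (0%:R); (0%:R); (0%:R)];
   [:: (0%:R); (0%:R); (0%:R); (0%:R); (0%:R); (0%:R); (0%:R); (3%:R)]].
Definition Pi_sl3R_L17 : seq (seq rat) :=
  [:: [:: (1%:R); (0%:R); (0%:R); (0%:R); (0%:R); (0%:R); (0%:R); (0%:R)];
   [:: (0%:R); (1%:R); (0%:R); (0%:R); (0%:R); (0%:R); (0%:R); (0%:R)];
   [:: (0%:R); (0%:R); (1%:R); (0%:R); (0%:R); (0%:R); (0%:R); (0%:R)];
   [:: (0%:R); (0%:R); (0%:R); (0%:R); (0%:R); (1%:R); (0%:R); (0%:R)];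
   [:: (0%:R); (0%:R); (0%:R); (0%:R); (0%:R); (0%:R); (1%:R); (0%:R)];
   [:: (0%:R); (0%:R); (0%:R); (0%:R); (1%:R); (0%:R); (0%:R); (0%:R)];
   [:: (0%:R); (0%:R); (0%:R); (-1%:R); (0%:R); (0%:R); (0%:R); (0%:R)];
   [:: (0%:R); (0%:R); (0%:R); (0%:R); (0%:R); (0%:R); (0%:R); ((1%:R / 3%:R))]].
Definition w_sl3R_L17 : seq nat := [:: 0; 0; 0; 1; 1; 1; 1; 0].


Lemma c_sl3R_L17 (R : realType) : sl3R_contracts_onto (@L8_17_m1 R).
Proof.
rewrite L8_17_m1E; apply: (claim_rmx (Q := Q_sl3R_L17) (Qi := Qi_sl3R_L17) (P := P_sl3R_L17) (Pi := Pi_sl3R_L17) (w := w_sl3R_L17)).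
  exact: iso_sl3R.
by vm_compute.
Qed.

Definition Q_sl3R_L21 : seq (seq rat) :=
  [:: [:: (2%:R); (0%:R); (0%:R); (0%:R); (0%:R); (4%:R); (0%:R); (0%:R)];
   [:: (0%:R); (0%:R); (0%:R); (0%:R); (0%:R); (-8%:R); (0%:R); (0%:R)];
   [:: (0%:R); (1%:R); (0%:R); (0%:R); (-2%:R); (0%:R); (0%:R); (0%:R)];
   [:: (0%:R); (0%:R); (0%:R); (1%:R); (0%:R); (0%:R); (0%:R); (0%:R)];
   [:: (0%:R); (0%:R); (2%:R); (0%:R); (0%:R); (0%:R); (24%:R); (0%:R)];
   [:: (0%:R); (1%:R); (0%:R); (0%:R); (2%:R); (0%:R); (0%:R); (0%:R)];
   [:: (0%:R); (0%:R); (0%:R); (0%:R); (0%:R); (0%:R); (0%:R); (96%:R)];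
   [:: (0%:R); (0%:R); (2%:R); (0%:R); (0%:R); (0%:R); (-24%:R); (0%:R)]].
Definition Qi_sl3R_L21 : seq (seq rat) :=
  [:: [:: ((1%:R / 2%:R)); ((1%:R / 4%:R)); (0%:R); (0%:R); (0%:R); (0%:R); (0%:R); (0%:R)];
   [:: (0%:R); (0%:R); ((1%:R / 2%:R)); (0%:R); (0%:R); ((1%:R / 2%:R)); (0%:R); (0%:R)];
   [:: (0%:R); (0%:R); (0%:R); (0%:R); ((1%:R / 4%:R)); (0%:R); (0%:R); ((1%:R / 4%:R))];
   [:: (0%:R); (0%:R); (0%:R); (1%:R); (0%:R); (0%:R); (0%:R); (0%:R)];
   [:: (0%:R); (0%:R); (-(1%:R / 4%:R)); (0%:R); (0%:R); ((1%:R / 4%:R)); (0%:R); (0%:R)];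
   [:: (0%:R); (-(1%:R / 8%:R)); (0%:R); (0%:R); (0%:R); (0%:R); (0%:R); (0%:R)];
   [:: (0%:R); (0%:R); (0%:R); (0%:R); ((1%:R / 48%:R)); (0%:R); (0%:R); (-(1%:R / 48%:R))];
   [:: (0%:R); (0%:R); (0%:R); (0%:R); (0%:R); (0%:R); ((1%:R / 96%:R)); (0%:R)]].
Definition P_sl3R_L21 : seq (seq rat) :=
  [:: [:: (1%:R); (0%:R); (0%:R); (0%:R); (0%:R); (0%:R); (0%:R); (0%:R)];
   [:: (0%:R); (1%:R); (0%:R); (0%:R); (0%:R); (0%:R); (0%:R); (0%:R)];
   [:: (0%:R); (0%:R); (1%:R); (0%:R); (0%:R); (0%:R); (0%:R); (0%:R)];
   [:: (0%:R); (0%:R); (0%:R); ((1%:R / 24%:R)); (0%:R); (0%:R); (0%:R); (0%:R)];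
   [:: (0%:R); (0%:R); (0%:R); (0%:R); ((1%:R / 24%:R)); (0%:R); (0%:R); (0%:R)];
   [:: (0%:R); (0%:R); (0%:R); (0%:R); (0%:R); ((1%:R / 12%:R)); (0%:R); (0%:R)];
   [:: (0%:R); (0%:R); (0%:R); (0%:R); (0%:R); (0%:R); ((1%:R / 4%:R)); (0%:R)];
   [:: (0%:R); (0%:R); (0%:R); (0%:R); (0%:R); (0%:R); (0%:R); (1%:R)]].
Definition Pi_sl3R_L21 : seq (seq rat) :=
  [:: [:: (1%:R); (0%:R); (0%:R); (0%:R); (0%:R); (0%:R); (0%:R); (0%:R)];
   [:: (0%:R); (1%:R); (0%:R); (0%:R); (0%:R); (0%:R); (0%:R); (0%:R)];
   [:: (0%:R); (0%:R); (1%:R); (0%:R); (0%:R); (0%:R); (0%:R); (0%:R)];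
   [:: (0%:R); (0%:R); (0%:R); (24%:R); (0%:R); (0%:R); (0%:R); (0%:R)];
   [:: (0%:R); (0%:R); (0%:R); (0%:R); (24%:R); (0%:R); (0%:R); (0%:R)];
   [:: (0%:R); (0%:R); (0%:R); (0%:R); (0%:R); (12%:R); (0%:R); (0%:R)];
   [:: (0%:R); (0%:R); (0%:R); (0%:R); (0%:R); (0%:R); (4%:R); (0%:R)];
   [:: (0%:R); (0%:R); (0%:R); (0%:R); (0%:R); (0%:R); (0%:R); (1%:R)]].
Definition w_sl3R_L21 : seq nat := [:: 0; 0; 0; 1; 1; 1; 1; 1].


Lemma c_sl3R_L21 (R : realType) : sl3R_contracts_onto (@L8_21 R).
Proof.
rewrite L8_21E; apply: (claim_rmx (Q := Q_sl3R_L21) (Qi := Qi_sl3R_L21) (P := P_sl3R_L21) (Pi := Pi_sl3R_L21) (w := w_sl3R_L21)).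
  exact: iso_sl3R.
by vm_compute.
Qed.

Theorem theorem2 (R : realType) :
  (* (i) su(3) *)
  (su3_contracts_onto (@L8_2 R) /\ su3_contracts_onto (@L8_4_0 R) /\
   su3_contracts_onto (@L8_5 R)) /\
  (* (ii) su(2,1) *)
  (su21_contracts_onto (@L8_2 R) /\ su21_contracts_onto (@L8_4_0 R) /\
   su21_contracts_onto (@L8_13 R 1) /\ su21_contracts_onto (@L8_14 R) /\
   su21_contracts_onto (@L8_15 R) /\ su21_contracts_onto (@L8_18_0 R) /\
   su21_contracts_onto (@L8_21 R)) /\
  (* (iii) sl(3,R) *)
  (sl3R_contracts_onto (@L8_5 R) /\ sl3R_contracts_onto (@L8_13 R (-1)) /\
   sl3R_contracts_onto (@L8_14 R) /\ sl3R_contracts_onto (@L8_15 R) /\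
   sl3R_contracts_onto (@L8_17_m1 R) /\ sl3R_contracts_onto (@L8_21 R)).
Proof.
exact (conj (conj (c_su3_L2 R) (conj (c_su3_L4 R) (c_su3_L5 R)))
  (conj (conj (c_su21_L2 R) (conj (c_su21_L4 R) (conj (c_su21_L13p R) (conj (c_su21_L14 R)
     (conj (c_su21_L15 R) (conj (c_su21_L18 R) (c_su21_L21 R)))))))
   (conj (c_sl3R_L5 R) (conj (c_sl3R_L13m R) (conj (c_sl3R_L14 R) (conj (c_sl3R_L15 R)
     (conj (c_sl3R_L17 R) (c_sl3R_L21 R)))))))).
Qed.
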